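(* (i) If the coin process satisfies $\overline H(\mathbf X)=\underline H(\mathbf X)=H(\mathbf X)>0$, then for every target process $\mathbf Y$, \[R^\star_{\mathrm{int}}(\mathbf X,\mathbf Y)=R^\star(\mathbf X,\mathbf Y)=\frac{\overline H(\mathbf Y)}{H(\mathbf X)}.\] (ii) If the target process satisfies $\overline H(\mathbf Y)=\underline H(\mathbf Y)=H(\mathbf Y)$ and the coin process satisfies $\underline H(\mathbf X)>0$, then \[R^\star_{\mathrm{int}}(\mathbf X,\mathbf Y)=R^\star(\mathbf X,\mathbf Y)=\frac{H(\mathbf Y)}{\underline H(\mathbf X)}.\]
   Context: Logarithms are base 2. $\mathcal X$, $\mathcal Y$ are finite; $\mathbf X=\{X^m\}$ (coin) and $\mathbf Y=\{Y^n\}$ (target) are arbitrary processes given by consistent distributions. $\overline H(\mathbf X)=\inf\{\lambda:\lim_n\Pr(\frac1n\log\frac{1}{P_{X^n}(X^n)}\ge\lambda)=0\}$, $\underline H(\mathbf X)=\sup\{\lambda:\lim_n\Pr(\frac1n\log\frac{1}{P_{X^n}(X^n)}\le\lambda)=0\}$, $H(\mathbf X)=\limsup_n\frac1nH(X^n)$; likewise for $\mathbf Y$ (when $\overline H=\underline H$ the limit defining $H$ exists and equals them). A random number generation algorithm for $Y^n$ is a map $\phi:\bigcup_{i\ge0}\mathcal X^i\to\{\bot\}\cup\mathcal Y^n$ whose leaves (finite $s$ with $\phi(s)\in\mathcal Y^n$ and $\phi(s')=\bot$ for all proper prefixes $s'$) satisfy $\sum_{\text{leaves }s:\phi(s)=y^n}P_{X^{|s|}}(s)=P_{Y^n}(y^n)$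 for all $y^n$; its stopping time is the length of the leaf reached by $X_1,X_2,\dots$ ($\infty$ if none). For algorithms $\phi_n$ generating $Y^n$ with stopping times $T_n$, $R$ is achievable if $\lim_n\Pr(T_n>nR)=0$; $R^\star$ is the infimum achievable rate over all valid algorithms and $R^\star_{\mathrm{int}}$ that for the interval algorithm. Interval algorithm: with $\mathcal X=\{1,\dots,M\}$, $\mathcal I_\bot=[0,1)$, $\mathcal I_{sx}=[\underline\alpha_s+(\overline\alpha_s-\underline\alpha_s)\sum_{k<x}P_{X_{i+1}|X^i}(k|s),\ \underline\alpha_s+(\overline\alpha_s-\underline\alpha_s)\sum_{k\le x}P_{X_{i+1}|X^i}(k|s))$ for $s\in\mathcal X^i$ with $\mathcal I_s=[\underline\alpha_s,\overline\alpha_s)$; $\mathcal J_t$ for $t\in\mathcal Y^j$ likewise from $P_{Y_{j+1}|Y^j}$; stop at the first $m$ with $\mathcal I_{X^m}\subseteq\mathcal J_{y^n}$ for some $y^n$ and output that $y^n$. *)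

(* Defs.v *)
From Stdlib Require Import Reals Lra Lia List Arith ZArith.
Import ListNotations.
Open Scope R_scope.

(** Alphabets are {0,...,M-1}; finite strings are [list nat]. *)
Definition valid (M : nat) (s : list nat) : Prop := Forall (fun a => (a < M)%nat) s.

Fixpoint words (M n : nat) : list (list nat) :=
  match n with
  | O => [ [] ]
  | S k => flat_map (fun w => map (fun a => w ++ [a]) (seq 0 M)) (words M k)
  end.

Definition sumR {A : Type} (f : A -> R) (l : list A) : R :=
  fold_right (fun x acc => f x + acc) 0 l.

Definition log2 (x : R) : R := ln x / ln 2.

(** A process = consistent family of distributions P_{X^n}, encoded as one
    function on finite strings: P s = P_{X^{|s|}}(s). *)
Definition is_process (M : nat) (P : list nat -> R) : Prop :=
  P [] = 1 /\
  (forall s, valid M s -> 0 <= P s) /\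
  (forall s, valid M s -> sumR (fun a => P (s ++ [a])) (seq 0 M) = P s).

Definition is_inf (E : R -> Prop) (m : R) : Prop :=
  (forall x, E x -> m <= x) /\ (forall m', (forall x, E x -> m' <= x) -> m' <= m).
Definition is_sup (E : R -> Prop) (m : R) : Prop :=
  (forall x, E x -> x <= m) /\ (forall m', (forall x, E x -> x <= m') -> m <= m').

Definition is_limsup (u : nat -> R) (l : R) : Prop :=
  forall eps, eps > 0 ->
    (exists N, forall n, (n >= N)%nat -> u n < l + eps) /\
    (forall N, exists n, (n >= N)%nat /\ u n > l - eps).

Definition info (P : list nat -> R) (n : nat) (w : list nat) : R :=
  / INR n * log2 (/ P w).

Definition spec_up (M : nat) (P : list nat -> R) (lam : R) : Prop :=
  Un_cv (fun n => sumR (fun w => if Rle_dec lam (info P n w) then P w else 0)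
                       (words M n)) 0.

Definition spec_low (M : nat) (P : list nat -> R) (lam : R) : Prop :=
  Un_cv (fun n => sumR (fun w => if Rle_dec (info P n w) lam then P w else 0)
                       (words M n)) 0.

Definition Hbar (M : nat) (P : list nat -> R) (h : R) : Prop := is_inf (spec_up M P) h.
Definition Hund (M : nat) (P : list nat -> R) (h : R) : Prop := is_sup (spec_low M P) h.

Definition entropy (M : nat) (P : list nat -> R) (n : nat) : R :=
  sumR (fun w => if Rle_dec (P w) 0 then 0 else - (P w * log2 (P w))) (words M n).

Definition Hrate (M : nat) (P : list nat -> R) (h : R) : Prop :=
  is_limsup (fun n => / INR n * entropy M P n) h.

(** Algorithms: phi : X^* -> {bot} + Y^n, bot = None. *)
Definition algo := list nat -> option (list nat).

Definition is_some {A} (o : option A) : bool := match o with Some _ => true | None => false end.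
Definition is_none {A} (o : option A) : bool := negb (is_some o).

Definition leafb (phi : algo) (s : list nat) : bool :=
  is_some (phi s) && forallb (fun k => is_none (phi (firstn k s))) (seq 0 (length s)).

Definition leaf_mass_to (MX : nat) (PX : list nat -> R) (phi : algo) (y : list nat) (j : nat) : R :=
  sumR (fun s => if leafb phi s then
                   match phi s with
                   | Some y' => if list_eq_dec Nat.eq_dec y' y then PX s else 0
                   | None => 0
                   end
                 else 0) (words MX j).

(** mass of all leaves of length j = Pr(T = j) *)
Definition leaf_mass (MX : nat) (PX : list nat -> R) (phi : algo) (j : nat) : R :=
  sumR (fun s => if leafb phi s then PX s else 0) (words MX j).

Definition gen_alg (MX : nat) (PX : list nat -> R) (MY : nat) (PY : list nat -> R)
    (n : nat) (phi : algo) : Prop :=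
  (forall s y, valid MX s -> phi s = Some y -> length y = n /\ valid MY y) /\
  (forall y, length y = n -> valid MY y -> infinite_sum (leaf_mass_to MX PX phi y) (PY y)).

(** Pr(T <= t) for real t (T = stopping time, = infinity if no leaf reached) *)
Definition prob_stop_le (MX : nat) (PX : list nat -> R) (phi : algo) (t : R) : R :=
  sumR (fun j => if Rle_dec (INR j) t then leaf_mass MX PX phi j else 0)
       (seq 0 (S (Z.to_nat (up t)))).

Definition prob_stop_gt (MX : nat) (PX : list nat -> R) (phi : algo) (t : R) : R :=
  1 - prob_stop_le MX PX phi t.

Definition achievable (MX : nat) (PX : list nat -> R) (MY : nat) (PY : list nat -> R) (r : R) : Prop :=
  exists phi : nat -> algo,
    (forall n, gen_alg MX PX MY PY n (phi n)) /\
    Un_cv (fun n => prob_stop_gt MX PX (phi n) (INR n * r)) 0.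

Definition cumcond (P : list nat -> R) (pre : list nat) (x : nat) : R :=
  sumR (fun k => P (pre ++ [k]) / P pre) (seq 0 x).

(* I_{pre ++ rest} computed from I_pre = [lo, hi) *)
Fixpoint ivl (P : list nat -> R) (pre : list nat) (lo hi : R) (rest : list nat) : R * R :=
  match rest with
  | [] => (lo, hi)
  | x :: r =>
      ivl P (pre ++ [x]) (lo + (hi - lo) * cumcond P pre x)
                         (lo + (hi - lo) * cumcond P pre (S x)) r
  end.

Definition interval (P : list nat -> R) (s : list nat) : R * R := ivl P [] 0 1 s.

(* [a,b) subset [c,d) as sets of reals *)
Definition subsetb (I J : R * R) : bool :=
  let (a, b) := I in let (c, d) := J in
  if Rle_dec b a then true
  else if Rle_dec c a then (if Rle_dec b d then true else false) else false.

(** interval algorithm for Y^n: output (the first, in enumeration order) y^n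
    with I_s inside J_{y^n}, if any *)
Definition interval_alg (PX : list nat -> R) (MY : nat) (PY : list nat -> R) (n : nat) : algo :=
  fun s => find (fun y => subsetb (interval PX s) (interval PY y)) (words MY n).

Definition int_achievable (MX : nat) (PX : list nat -> R) (MY : nat) (PY : list nat -> R) (r : R) : Prop :=
  Un_cv (fun n => prob_stop_gt MX PX (interval_alg PX MY PY n) (INR n * r)) 0.

(* Main.v *)
Require Import Defs.
From Stdlib Require Import Reals.
Open Scope R_scope.
From Stdlib Require Import Lra Lia List Arith ZArith Bool Classical.
Import ListNotations.
Open Scope R_scope.

Lemma sumR_nil {A} (f : A -> R) : sumR f [] = 0.
Proof. reflexivity. Qed.
Lemma sumR_cons {A} (f : A -> R) x l : sumR f (x :: l) = f x + sumR f l.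
Proof. reflexivity. Qed.
Lemma sumR_app {A} (f : A -> R) l1 l2 : sumR f (l1 ++ l2) = sumR f l1 + sumR f l2.
Proof. induction l1; simpl; [lra|]. unfold sumR in *; simpl. rewrite IHl1. lra. Qed.
Lemma sumR_ext {A} (f g : A -> R) l : (forall x, In x l -> f x = g x) -> sumR f l = sumR g l.
Proof. induction l; intros H; simpl; auto. unfold sumR in *; simpl.
  rewrite H by (left; auto). rewrite IHl; auto. intros; apply H; right; auto. Qed.
Lemma sumR_le {A} (f g : A -> R) l : (forall x, In x l -> f x <= g x) -> sumR f l <= sumR g l.
Proof. induction l; intros H; unfold sumR in *; simpl; [lra|].
  assert (f a <= g a) by (apply H; left; auto).
  assert (fold_right (fun x acc => f x + acc) 0 l <= fold_right (fun x acc => g x + acc) 0 l)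
   by (apply IHl; intros; apply H; right; auto). lra. Qed.
Lemma sumR_nonneg {A} (f : A -> R) l : (forall x, In x l -> 0 <= f x) -> 0 <= sumR f l.
Proof. intros H. induction l; unfold sumR in *; simpl; [lra|].
  assert (0 <= f a) by (apply H; left; auto).
  assert (0 <= fold_right (fun x acc => f x + acc) 0 l) by (apply IHl; intros; apply H; right; auto). lra. Qed.
Lemma sumR_plus {A} (f g : A -> R) l : sumR (fun x => f x + g x) l = sumR f l + sumR g l.
Proof. induction l; unfold sumR in *; simpl; [lra|]. rewrite IHl. lra. Qed.
Lemma sumR_minus {A} (f g : A -> R) l : sumR (fun x => f x - g x) l = sumR f l - sumR g l.
Proof. induction l; unfold sumR in *; simpl; [lra|]. rewrite IHl. lra. Qed.
Lemma sumR_scal {A} (f : A -> R) c l : sumR (fun x => c * f x) l = c * sumR f l.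
Proof. induction l; unfold sumR in *; simpl; [lra|]. rewrite IHl. lra. Qed.
Lemma sumR_zero {A} l : sumR (fun _ : A => 0) l = 0.
Proof. induction l; unfold sumR in *; simpl; [lra|]. rewrite IHl. lra. Qed.
Lemma sumR_map {A B} (f : B -> R) (g : A -> B) l : sumR f (map g l) = sumR (fun x => f (g x)) l.
Proof. induction l; unfold sumR in *; simpl; auto. rewrite IHl; auto. Qed.
Lemma sumR_flat_map {A B} (f : B -> R) (g : A -> list B) l :
  sumR f (flat_map g l) = sumR (fun x => sumR f (g x)) l.
Proof. induction l; simpl; auto. rewrite sumR_app, IHl. reflexivity. Qed.
Lemma sumR_swap {A B} (f : A -> B -> R) l1 l2 :
  sumR (fun x => sumR (f x) l2) l1 = sumR (fun y => sumR (fun x => f x y) l1) l2.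
Proof. induction l1. simpl. rewrite sumR_zero; auto.
  rewrite sumR_cons, IHl1, <- sumR_plus. reflexivity. Qed.
Lemma sumR_ge_term {A} (f : A -> R) l x : In x l -> (forall y, In y l -> 0 <= f y) -> f x <= sumR f l.
Proof. induction l; intros Hi H; [contradiction|]. rewrite sumR_cons. simpl in Hi.
  destruct Hi as [->|Hi].
  - assert (0 <= sumR f l) by (apply sumR_nonneg; intros; apply H; simpl; auto). lra.
  - assert (f x <= sumR f l) by (apply IHl; auto; intros; apply H; simpl; auto). assert (0 <= f a) by (apply H; simpl; auto). lra. Qed.
Lemma sumR_seq_S f n : sumR f (seq 0 (S n)) = sumR f (seq 0 n) + f n.
Proof. rewrite seq_S, sumR_app. simpl. unfold sumR; simpl. lra. Qed.

Lemma valid_app M s t : valid M (s ++ t) <-> valid M s /\ valid M t.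
Proof. unfold valid. apply Forall_app. Qed.
Lemma valid_nil M : valid M [].
Proof. constructor. Qed.
Lemma valid_one M a : (a < M)%nat -> valid M [a].
Proof. intros; constructor; auto. Qed.
Lemma valid_cons M a s : valid M (a :: s) <-> (a < M)%nat /\ valid M s.
Proof. split; intros H. inversion H; auto. destruct H; constructor; auto. Qed.

Lemma words_S {A} M k (g : list nat -> A) (f : A -> R) :
  sumR (fun w => f (g w)) (words M (S k)) =
  sumR (fun w => sumR (fun a => f (g (w ++ [a]))) (seq 0 M)) (words M k).
Proof. simpl. rewrite (sumR_flat_map (fun w => f (g w))). apply sumR_ext; intros.
  rewrite sumR_map. reflexivity. Qed.

Lemma words_S' M k (g : list nat -> R) :
  sumR g (words M (S k)) = sumR (fun w => sumR (fun a => g (w ++ [a])) (seq 0 M)) (words M k).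
Proof. apply (words_S M k g (fun x => x)). Qed.

Lemma In_words M n w : In w (words M n) <-> length w = n /\ valid M w.
Proof. revert w; induction n; intros w; simpl.
  - split. intros [<-|[]]; split; auto; constructor.
    intros [H _]; destruct w; simpl in H; auto; discriminate.
  - rewrite in_flat_map. split.
    + intros [w' [Hw' Hm]]. apply in_map_iff in Hm. destruct Hm as [a [<- Ha]].
      apply IHn in Hw'. destruct Hw'. apply in_seq in Ha.
      rewrite length_app; simpl. split; [lia|]. apply valid_app; split; auto. apply valid_one; lia.
    + intros [Hl Hv]. destruct (exists_last (l:=w)) as [w' [a ->]].
      { intros ->; simpl in Hl; discriminate. }
      rewrite length_app in Hl; simpl in Hl. apply valid_app in Hv as [Hv1 Hv2].
      exists w'. split. apply IHn; split; auto; lia.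
      apply in_map_iff. exists a; split; auto. apply in_seq. inversion Hv2; lia.
Qed.

Lemma words_split M m k (g : list nat -> R) :
  sumR g (words M (m + k)) = sumR (fun t => sumR (fun u => g (t ++ u)) (words M k)) (words M m).
Proof. revert g; induction k; intros g.
  - rewrite Nat.add_0_r. apply sumR_ext; intros. simpl. unfold sumR; simpl. rewrite app_nil_r; lra.
  - rewrite Nat.add_succ_r, words_S', IHk. apply sumR_ext; intros t _.
    rewrite words_S'. apply sumR_ext; intros u _. apply sumR_ext; intros a _.
    rewrite app_assoc; auto.
Qed.

Lemma words_front M k (g : list nat -> R) :
  sumR g (words M (S k)) = sumR (fun x => sumR (fun u => g (x :: u)) (words M k)) (seq 0 M).
Proof. change (S k) with (1 + k)%nat. rewrite words_split. simpl words.
  rewrite app_nil_r, sumR_map. reflexivity. Qed.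

Lemma delta_nodup {A} (eqd : forall x y : A, {x = y} + {x <> y}) (g : A -> R) l a :
  NoDup l -> In a l -> sumR (fun b => if eqd b a then g b else 0) l = g a.
Proof. induction l; intros Hn Hi; [contradiction|]. inversion Hn; subst. rewrite sumR_cons.
  destruct Hi as [->|Hi].
  - destruct (eqd a a); [|congruence]. rewrite (sumR_ext _ (fun _ => 0)). rewrite sumR_zero; lra.
    intros x Hx. destruct (eqd x a); auto. subst; contradiction.
  - destruct (eqd a0 a). subst; contradiction. rewrite IHl; auto. lra. Qed.

Lemma delta_words M n s (g : list nat -> R) :
  length s = n -> valid M s ->
  sumR (fun y => if list_eq_dec Nat.eq_dec y s then g y else 0) (words M n) = g s.
Proof. revert s g; induction n; intros s g Hl Hv.
  - destruct s; [|simpl in Hl; discriminate]. simpl. unfold sumR; simpl. lra.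
  - destruct (exists_last (l:=s)) as [s' [a ->]]. { intros ->; simpl in Hl; discriminate. }
    rewrite length_app in Hl; simpl in Hl. apply valid_app in Hv as [Hv1 Hv2].
    rewrite words_S'.
    rewrite (sumR_ext _ (fun w => if list_eq_dec Nat.eq_dec w s' then g (s' ++ [a]) else 0)).
    apply (IHn s' (fun _ => g (s' ++ [a]))); auto; lia.
    intros w _. destruct (list_eq_dec Nat.eq_dec w s').
    + subst. rewrite (sumR_ext _ (fun b => if Nat.eq_dec b a then g (s' ++ [b]) else 0)).
      apply (delta_nodup Nat.eq_dec (fun b => g (s' ++ [b]))). apply seq_NoDup.
      apply in_seq. inversion Hv2; lia.
      intros b _. destruct (list_eq_dec Nat.eq_dec (s' ++ [b]) (s' ++ [a])), (Nat.eq_dec b a); subst; auto.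
      apply app_inj_tail in e as [_ ?]; congruence. congruence.
    + rewrite (sumR_ext _ (fun _ => 0)). apply sumR_zero. intros b _.
      destruct (list_eq_dec Nat.eq_dec (w ++ [b]) (s' ++ [a])); auto.
      apply app_inj_tail in e as [? _]; congruence.
Qed.

Section Proc.
Variable M : nat.
Variable P : list nat -> R.
Hypothesis HP : is_process M P.

Lemma P_nonneg s : valid M s -> 0 <= P s.
Proof. destruct HP as [_ [H _]]. auto. Qed.
Lemma P_cons s : valid M s -> sumR (fun a => P (s ++ [a])) (seq 0 M) = P s.
Proof. destruct HP as [_ [_ H]]. auto. Qed.
Lemma P_ext s k : valid M s -> sumR (fun t => P (s ++ t)) (words M k) = P s.
Proof. revert s; induction k; intros s Hs.
  - simpl. unfold sumR; simpl. rewrite app_nil_r; lra.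
  - rewrite words_S'. rewrite <- (IHk s Hs). apply sumR_ext; intros w Hw.
    apply In_words in Hw as [_ Hw]. rewrite <- P_cons. apply sumR_ext; intros. rewrite app_assoc; auto.
    apply valid_app; auto. Qed.
Lemma P_total k : sumR P (words M k) = 1.
Proof. destruct HP as [H0 _]. rewrite <- H0. rewrite <- (P_ext [] k) by constructor.
  apply sumR_ext; auto. Qed.
Lemma P_step_le s a : valid M s -> (a < M)%nat -> P (s ++ [a]) <= P s.
Proof. intros Hs Ha. rewrite <- (P_cons s Hs). apply (sumR_ge_term (fun a => P (s ++ [a]))).
  apply in_seq; lia. intros y Hy. apply P_nonneg. apply valid_app; split; auto. apply valid_one.
  apply in_seq in Hy; lia. Qed.
Lemma P_prefix_le s t : valid M (s ++ t) -> P (s ++ t) <= P s.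
Proof. intros Hv. apply valid_app in Hv as [Hs Ht]. rewrite <- (P_ext s (length t) Hs).
  apply (sumR_ge_term (fun t => P (s ++ t))). apply In_words; auto.
  intros y Hy. apply P_nonneg, valid_app; split; auto. apply In_words in Hy; tauto. Qed.
Lemma P_le1 s : valid M s -> P s <= 1.
Proof. intros. destruct HP as [H0 _]. rewrite <- H0. apply (P_prefix_le [] s); auto. Qed.
End Proc.

Ltac dest_all := repeat match goal with
  | |- context [Rle_dec ?x ?y] => destruct (Rle_dec x y)
  | H : context [Rle_dec ?x ?y] |- _ => destruct (Rle_dec x y) end.

Definition ov (a b c d : R) : R := Rmax 0 (Rmin b d - Rmax a c).
Definition clamp (a b x : R) : R := Rmin b (Rmax a x).

Lemma ov_clamp a b c d : a <= b -> c <= d -> ov a b c d = clamp a b d - clamp a b c.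
Proof. intros. unfold ov, clamp, Rmax, Rmin.
  dest_all; lra. Qed.
Lemma ov_nonneg a b c d : 0 <= ov a b c d.
Proof. unfold ov; apply Rmax_l. Qed.
Lemma ov_le a b c d : a <= b -> ov a b c d <= b - a.
Proof. intros. unfold ov, Rmax, Rmin.
  dest_all; lra. Qed.
Lemma ov_sym a b c d : ov a b c d = ov c d a b.
Proof. unfold ov, Rmax, Rmin.
  dest_all; lra. Qed.
Lemma ov_in a b c d : a <= b -> c <= a -> b <= d -> ov a b c d = b - a.
Proof. intros. unfold ov, Rmax, Rmin.
  dest_all; lra. Qed.
Lemma ov_strad a b c d : a <= b -> c <= d -> 0 < ov a b c d -> ~ (c <= a /\ b <= d) ->
  (a < c < b) \/ (a < d < b).
Proof. intros. unfold ov, Rmax, Rmin in *.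
  dest_all; lra. Qed.
Lemma ov_point a b p e : a < p < b -> b - a <= e -> ov a b (p - e) (p + e) = b - a.
Proof. intros. apply ov_in; lra. Qed.

Lemma telescope (g : nat -> R) n : sumR (fun x => g (S x) - g x) (seq 0 n) = g n - g 0%nat.
Proof. induction n. simpl. unfold sumR; simpl; lra. rewrite sumR_seq_S, IHn. lra. Qed.

Section Ivl.
Variable M : nat.
Variable P : list nat -> R.
Hypothesis HP : is_process M P.

Definition Ssum (pre : list nat) (x : nat) := sumR (fun k => P (pre ++ [k])) (seq 0 x).

Fixpoint cumr (pre rest : list nat) : R :=
  match rest with
  | [] => 0
  | x :: r => Ssum pre x + cumr (pre ++ [x]) r
  end.

Lemma Ssum_S pre x : Ssum pre (S x) = Ssum pre x + P (pre ++ [x]).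
Proof. unfold Ssum; rewrite sumR_seq_S; auto. Qed.
Lemma Ssum_M pre : valid M pre -> Ssum pre M = P pre.
Proof. intros; unfold Ssum; apply (P_cons M P HP); auto. Qed.
Lemma Ssum_0 pre : Ssum pre 0 = 0.
Proof. reflexivity. Qed.
Lemma Ssum_nonneg pre x : valid M pre -> (x <= M)%nat -> 0 <= Ssum pre x.
Proof. intros. apply sumR_nonneg; intros. apply (P_nonneg M P HP). apply valid_app; split; auto.
  apply valid_one. apply in_seq in H1; lia. Qed.
Lemma Ssum_mono pre x y : valid M pre -> (x <= y)%nat -> (y <= M)%nat -> Ssum pre x <= Ssum pre y.
Proof. intros Hv Hxy HyM. induction Hxy. lra. rewrite Ssum_S.
  assert (0 <= P (pre ++ [m])) by (apply (P_nonneg M P HP); apply valid_app; split; auto; apply valid_one; lia).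
  assert (Ssum pre x <= Ssum pre m) by (apply IHHxy; lia). lra. Qed.

Lemma cc pre lo hi x : valid M pre -> (x <= M)%nat -> hi - lo = P pre ->
  (hi - lo) * cumcond P pre x = Ssum pre x.
Proof. intros Hv Hx Hd. unfold cumcond, Ssum. rewrite Hd.
  destruct (Req_dec (P pre) 0) as [H0|H0].
  - rewrite H0, Rmult_0_l. rewrite (sumR_ext _ (fun _ => 0)). rewrite sumR_zero; auto.
    intros k Hk. apply in_seq in Hk.
    assert (P (pre ++ [k]) <= P pre) by (apply (P_step_le M P HP); auto; lia).
    assert (0 <= P (pre ++ [k])) by (apply (P_nonneg M P HP); apply valid_app; split; auto; apply valid_one; lia).
    lra.
  - rewrite <- sumR_scal. apply sumR_ext; intros. field; auto. Qed.

Lemma ivl_closed pre lo hi t : valid M pre -> valid M t -> hi - lo = P pre ->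
  ivl P pre lo hi t = (lo + cumr pre t, lo + cumr pre t + P (pre ++ t)).
Proof. revert pre lo hi; induction t as [|x r IH]; intros pre lo hi Hv Ht Hd.
  - simpl. rewrite app_nil_r. f_equal; lra.
  - apply valid_cons in Ht as [Hx Hr]. simpl.
    rewrite (cc pre lo hi x), (cc pre lo hi (S x)); auto; try lia.
    rewrite IH; auto. rewrite <- app_assoc. simpl. f_equal; lra.
    apply valid_app; split; auto; apply valid_one; auto.
    rewrite Ssum_S; lra. Qed.

Definition lft (s : list nat) := cumr [] s.

Lemma interval_closed s : valid M s -> interval P s = (lft s, lft s + P s).
Proof. intros Hs. unfold interval. destruct HP as [H0 _].
  rewrite ivl_closed; auto. unfold lft. simpl. f_equal; lra. constructor. rewrite H0; lra. Qed.

Lemma cumr_nonneg pre t : valid M pre -> valid M t -> 0 <= cumr pre t.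
Proof. revert pre; induction t as [|x r IH]; intros pre Hv Ht; simpl. lra.
  apply valid_cons in Ht as [Hx Hr].
  assert (0 <= Ssum pre x) by (apply Ssum_nonneg; auto; lia).
  assert (0 <= cumr (pre ++ [x]) r) by (apply IH; auto; apply valid_app; split; auto; apply valid_one; auto).
  lra. Qed.

Lemma cumr_bound pre t : valid M pre -> valid M t -> cumr pre t + P (pre ++ t) <= P pre.
Proof. revert pre; induction t as [|x r IH]; intros pre Hv Ht; simpl. rewrite app_nil_r; lra.
  apply valid_cons in Ht as [Hx Hr].
  assert (Hv' : valid M (pre ++ [x])) by (apply valid_app; split; auto; apply valid_one; auto).
  specialize (IH _ Hv' Hr). rewrite <- app_assoc in IH. simpl in IH.
  assert (Ssum pre (S x) <= Ssum pre M) by (apply Ssum_mono; auto; lia).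
  rewrite Ssum_S, Ssum_M in H by auto. lra. Qed.

Lemma cumr_app pre s t : cumr pre (s ++ t) = cumr pre s + cumr (pre ++ s) t.
Proof. revert pre; induction s as [|x s IH]; intros pre; simpl. rewrite app_nil_r; lra.
  rewrite IH. rewrite <- app_assoc. simpl. lra. Qed.

Lemma lft_nonneg s : valid M s -> 0 <= lft s.
Proof. intros; apply cumr_nonneg; auto; constructor. Qed.
Lemma lft_bound s : valid M s -> lft s + P s <= 1.
Proof. intros. destruct HP as [H0 _]. rewrite <- H0. apply (cumr_bound [] s); auto; constructor. Qed.
Lemma lft_nest s t : valid M (s ++ t) ->
  lft s <= lft (s ++ t) /\ lft (s ++ t) + P (s ++ t) <= lft s + P s.
Proof. intros Hv. apply valid_app in Hv as [Hs Ht]. unfold lft. rewrite cumr_app. simpl.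
  pose proof (cumr_nonneg s t Hs Ht). pose proof (cumr_bound s t Hs Ht). lra. Qed.

Lemma ov_sum_gen a b k : a <= b -> forall pre lo, valid M pre ->
  sumR (fun t => ov a b (lo + cumr pre t) (lo + cumr pre t + P (pre ++ t))) (words M k)
  = clamp a b (lo + P pre) - clamp a b lo.
Proof. intros Hab. induction k; intros pre lo Hv.
  - simpl. unfold sumR; simpl. rewrite app_nil_r, Rplus_0_r, Rplus_0_r.
    rewrite ov_clamp; auto. pose proof (P_nonneg M P HP pre Hv). lra.
  - rewrite words_front.
    rewrite (sumR_ext _ (fun x => clamp a b (lo + Ssum pre (S x)) - clamp a b (lo + Ssum pre x))).
    rewrite (telescope (fun x => clamp a b (lo + Ssum pre x))). rewrite Ssum_M, Ssum_0, Rplus_0_r; auto.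
    intros x Hx. apply in_seq in Hx.
    assert (Hv' : valid M (pre ++ [x])) by (apply valid_app; split; auto; apply valid_one; lia).
    rewrite Ssum_S, <- (Rplus_assoc lo), <- (IHk (pre ++ [x]) (lo + Ssum pre x) Hv').
    apply sumR_ext; intros u _. simpl. rewrite <- app_assoc. simpl. f_equal; lra.
Qed.

Lemma ov_sum a b k : 0 <= a <= b -> b <= 1 ->
  sumR (fun t => ov a b (lft t) (lft t + P t)) (words M k) = b - a.
Proof. intros Hab Hb1. pose proof (ov_sum_gen a b k ltac:(lra) [] 0 ltac:(constructor)) as H1.
  destruct HP as [H0 _]. rewrite H0 in H1.
  rewrite (sumR_ext _ (fun t => ov a b (0 + cumr [] t) (0 + cumr [] t + P ([] ++ t)))).
  rewrite H1. unfold clamp, Rmax, Rmin.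
  dest_all; lra.
  intros. unfold lft. simpl. f_equal; lra. Qed.
End Ivl.

Fixpoint fo (phi : algo) (s : list nat) : option (list nat) :=
  match s with
  | [] => phi []
  | x :: r => match phi [] with Some z => Some z | None => fo (fun t => phi (x :: t)) r end
  end.

Lemma fo_snoc phi s a : fo phi (s ++ [a]) =
  match fo phi s with Some z => Some z | None => phi (s ++ [a]) end.
Proof. revert phi; induction s as [|x r IH]; intros phi; simpl.
  - destruct (phi []); auto.
  - destruct (phi []); auto. Qed.

Lemma forallb_map_S (f : nat -> bool) l : forallb f (map S l) = forallb (fun k => f (S k)) l.
Proof. induction l; simpl; auto. rewrite IHl; auto. Qed.

Lemma forallb_cons' (f : nat -> bool) a l : forallb f (a :: l) = f a && forallb f l.
Proof. reflexivity. Qed.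

Lemma forallb_ext_in {A} (f g : A -> bool) l : (forall x, In x l -> f x = g x) -> forallb f l = forallb g l.
Proof. induction l; intros H; simpl; auto. rewrite H by (left; auto). rewrite IHl; auto.
  intros; apply H; right; auto. Qed.

Lemma fo_forall phi s : forallb (fun k => is_none (phi (firstn k s))) (seq 0 (S (length s))) = is_none (fo phi s).
Proof. revert phi; induction s as [|x r IH]; intros phi.
  - simpl. apply andb_true_r.
  - replace (seq 0 (S (length (x :: r)))) with (0%nat :: map S (seq 0 (S (length r)))) by (simpl; rewrite seq_shift; auto).
    rewrite forallb_cons', forallb_map_S. cbn [firstn].
    rewrite (IH (fun t => phi (x :: t))). simpl. destruct (phi []); auto. Qed.

Lemma leafb_snoc phi s a : leafb phi (s ++ [a]) = is_some (phi (s ++ [a])) && is_none (fo phi s).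
Proof. unfold leafb. f_equal. rewrite length_app, Nat.add_1_r, <- fo_forall.
  apply forallb_ext_in. intros k Hk. apply in_seq in Hk.
  rewrite firstn_app. replace (k - length s)%nat with 0%nat by lia. simpl. rewrite app_nil_r. auto. Qed.

Lemma leafb_nil phi : leafb phi [] = is_some (phi []).
Proof. unfold leafb; simpl. apply andb_true_r. Qed.

Lemma fo_spec phi s z : fo phi s = Some z -> exists k, (k <= length s)%nat /\ phi (firstn k s) = Some z.
Proof. revert phi; induction s as [|x r IH]; intros phi H; simpl in H.
  - exists 0%nat; auto.
  - destruct (phi []) eqn:E. inversion H; subst. exists 0%nat; simpl; split; auto; lia.
    apply IH in H as [k [Hk Hz]]. exists (S k); simpl; split; auto; lia. Qed.

Section Leaf.
Variable MX : nat.
Variable PX : list nat -> R.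
Hypothesis HPX : is_process MX PX.
Variable phi : algo.
Variable H : option (list nat) -> R.
Hypothesis H0 : H None = 0.

Lemma leaf_decomp n :
  sumR (fun j => sumR (fun s => if leafb phi s then H (phi s) * PX s else 0) (words MX j)) (seq 0 (S n))
  = sumR (fun s => H (fo phi s) * PX s) (words MX n).
Proof. induction n.
  - simpl. unfold sumR; simpl. rewrite leafb_nil. destruct (phi []); simpl; try rewrite H0; lra.
  - rewrite sumR_seq_S, IHn, !words_S', <- sumR_plus. apply sumR_ext; intros s Hs.
    apply In_words in Hs as [_ Hs].
    destruct (fo phi s) eqn:E.
    + rewrite (sumR_ext _ (fun _ => 0)). rewrite sumR_zero, Rplus_0_r.
      rewrite (sumR_ext _ (fun a => H (Some l) * PX (s ++ [a]))). rewrite sumR_scal, (P_cons MX PX HPX); auto.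
      intros a _. rewrite fo_snoc, E. auto.
      intros a _. rewrite leafb_snoc, E. simpl. rewrite andb_false_r. auto.
    + rewrite H0, Rmult_0_l, Rplus_0_l. apply sumR_ext; intros a _.
      rewrite leafb_snoc, fo_snoc, E. simpl. destruct (phi (s ++ [a])); simpl; auto. rewrite H0; lra.
Qed.
End Leaf.

Lemma sum_f_R0_sumR f n : sum_f_R0 f n = sumR f (seq 0 (S n)).
Proof. induction n. simpl. unfold sumR; simpl; lra. simpl sum_f_R0. rewrite IHn, (sumR_seq_S f (S n)). auto. Qed.

Definition Hsome (o : option (list nat)) : R := if is_some o then 1 else 0.
Definition Hto (y : list nat) (o : option (list nat)) : R :=
  match o with Some y' => if list_eq_dec Nat.eq_dec y' y then 1 else 0 | None => 0 end.

Lemma leaf_mass_decomp MX PX phi n : is_process MX PX ->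
  sumR (leaf_mass MX PX phi) (seq 0 (S n)) = sumR (fun s => Hsome (fo phi s) * PX s) (words MX n).
Proof. intros HP. rewrite <- (leaf_decomp MX PX HP phi Hsome eq_refl n). apply sumR_ext; intros j _.
  unfold leaf_mass. apply sumR_ext; intros s _. destruct (leafb phi s) eqn:E; auto.
  unfold leafb in E. apply andb_prop in E as [E _]. unfold Hsome. rewrite E. lra. Qed.

Lemma leaf_mass_to_decomp MX PX phi y n : is_process MX PX ->
  sum_f_R0 (leaf_mass_to MX PX phi y) n = sumR (fun s => Hto y (fo phi s) * PX s) (words MX n).
Proof. intros HP. rewrite sum_f_R0_sumR. rewrite <- (leaf_decomp MX PX HP phi (Hto y) eq_refl n). apply sumR_ext; intros j _.
  unfold leaf_mass_to. apply sumR_ext; intros s _. destruct (leafb phi s) eqn:E; auto.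
  unfold Hto. destruct (phi s); [|lra]. destruct (list_eq_dec Nat.eq_dec l y); lra. Qed.

Lemma up_lt_INR (t : R) j : (j < Z.to_nat (up t))%nat -> INR j <= t.
Proof. intros Hj. destruct (archimed t) as [H1 H2].
  assert (Hpos : (0 < up t)%Z) by lia.
  assert (Z.of_nat j + 1 <= up t)%Z by lia.
  apply IZR_le in H. rewrite plus_IZR in H. rewrite INR_IZR_INZ. simpl in H. lra. Qed.

Lemma INR_up_gt (t : R) : t < INR (Z.to_nat (up t)).
Proof. destruct (archimed t) as [H1 H2]. destruct (Z_le_gt_dec 0 (up t)).
  rewrite INR_IZR_INZ, Z2Nat.id; auto; lra.
  replace (Z.to_nat (up t)) with 0%nat by lia. simpl. apply Z.gt_lt in g. apply IZR_lt in g. lra. Qed.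

Lemma prob_stop_le_eq MX PX phi t :
  prob_stop_le MX PX phi t = sumR (leaf_mass MX PX phi) (seq 0 (Z.to_nat (up t))).
Proof. unfold prob_stop_le. rewrite sumR_seq_S.
  destruct (Rle_dec (INR (Z.to_nat (up t))) t). pose proof (INR_up_gt t); lra.
  rewrite Rplus_0_r. apply sumR_ext; intros j Hj. apply in_seq in Hj.
  destruct (Rle_dec (INR j) t); auto. exfalso; apply n0, up_lt_INR; lia. Qed.

Definition thr (n : nat) (k : R) : R := exp (- (INR n * k * ln 2)).

Lemma ln2_pos : 0 < ln 2.
Proof. pose proof ln_lt_2. lra. Qed.

Lemma exp_le_iff x y : exp x <= exp y <-> x <= y.
Proof. split; intros H.
  destruct (Rle_dec x y); auto. assert (y < x) by lra. apply exp_increasing in H0. lra.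
  destruct (Req_dec x y). subst; lra. left; apply exp_increasing; lra. Qed.

Lemma info_ge_iff P n w k : (1 <= n)%nat -> 0 < P w -> (k <= info P n w <-> P w <= thr n k).
Proof. intros Hn Hp. unfold info, log2, thr. rewrite ln_Rinv by auto.
  rewrite <- (exp_ln (P w)) at 2 by auto. rewrite exp_le_iff.
  assert (HN : 0 < INR n) by (apply lt_0_INR; lia). pose proof ln2_pos.
  set (x := ln (P w)). set (N := INR n). set (L := ln 2).
  assert (Hq : / N * (- x / L) * (N * L) = - x) by (unfold L, N in *; field; lra).
  assert (HNL : 0 < N * L) by (apply Rmult_lt_0_compat; auto).
  split; intros H1.
  - assert (k * (N * L) <= / N * (- x / L) * (N * L)) by (apply Rmult_le_compat_r; lra). nra.
  - assert (H2 : k * (N * L) <= / N * (- x / L) * (N * L)) by nra.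
    apply Rmult_le_reg_r in H2; auto. Qed.

Definition PrLe (M : nat) (P : list nat -> R) (n : nat) (c : R) : R :=
  sumR (fun w => if Rle_dec (P w) c then P w else 0) (words M n).
Definition PrGt (M : nat) (P : list nat -> R) (n : nat) (c : R) : R :=
  sumR (fun w => if Rle_dec (P w) c then 0 else P w) (words M n).

Lemma PrLe_Gt M P n c : is_process M P -> PrLe M P n c + PrGt M P n c = 1.
Proof. intros HP. unfold PrLe, PrGt. rewrite <- sumR_plus. rewrite <- (P_total M P HP n).
  apply sumR_ext; intros. destruct (Rle_dec (P x) c); lra. Qed.
Lemma PrLe_nonneg M P n c : is_process M P -> 0 <= PrLe M P n c.
Proof. intros HP. apply sumR_nonneg; intros w Hw. apply In_words in Hw as [_ Hw].
  pose proof (P_nonneg M P HP w Hw). destruct (Rle_dec (P w) c); lra. Qed.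
Lemma PrGt_nonneg M P n c : is_process M P -> 0 <= PrGt M P n c.
Proof. intros HP. apply sumR_nonneg; intros w Hw. apply In_words in Hw as [_ Hw].
  pose proof (P_nonneg M P HP w Hw). destruct (Rle_dec (P w) c); lra. Qed.

Lemma Un_cv_squeeze (u v : nat -> R) N0 :
  (forall n, (n >= N0)%nat -> 0 <= u n <= v n) -> Un_cv v 0 -> Un_cv u 0.
Proof. intros H Hv eps Heps. destruct (Hv eps Heps) as [N HN]. exists (max N N0). intros n Hn.
  specialize (HN n ltac:(lia)). specialize (H n ltac:(lia)). unfold R_dist in *.
  rewrite Rminus_0_r in *. rewrite Rabs_right in * by lra. lra. Qed.

Section Spec.
Variable M : nat.
Variable P : list nat -> R.
Hypothesis HP : is_process M P.

Lemma spec_up_le n lam : (1 <= n)%nat ->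
  sumR (fun w => if Rle_dec lam (info P n w) then P w else 0) (words M n) <= PrLe M P n (thr n lam).
Proof. intros Hn. apply sumR_le; intros w Hw. apply In_words in Hw as [_ Hw].
  pose proof (P_nonneg M P HP w Hw). destruct (Req_dec (P w) 0) as [E|E].
  rewrite E. destruct (Rle_dec lam _), (Rle_dec 0 _); lra.
  destruct (Rle_dec lam (info P n w)), (Rle_dec (P w) (thr n lam)); try lra.
  exfalso. apply n0. apply info_ge_iff; auto. lra. Qed.

Lemma PrLe_le_spec_up n lam lam' : (1 <= n)%nat -> lam' <= lam ->
  PrLe M P n (thr n lam) <= sumR (fun w => if Rle_dec lam' (info P n w) then P w else 0) (words M n).
Proof. intros Hn Hl. apply sumR_le; intros w Hw. apply In_words in Hw as [_ Hw].
  pose proof (P_nonneg M P HP w Hw). destruct (Req_dec (P w) 0) as [E|E].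
  rewrite E. destruct (Rle_dec lam' _), (Rle_dec 0 _); lra.
  destruct (Rle_dec lam' (info P n w)), (Rle_dec (P w) (thr n lam)); try lra.
  exfalso. apply n0. apply info_ge_iff in r; auto; lra. Qed.

Lemma SU1 h lam : Hbar M P h -> lam > h -> Un_cv (fun n => PrLe M P n (thr n lam)) 0.
Proof. intros [Hlb Hglb] Hl.
  assert (exists l', spec_up M P l' /\ l' < lam) as [l' [Hs Hl']].
  { apply NNPP; intros Hn. assert (lam <= h); [|lra]. apply Hglb. intros x Hx.
    destruct (Rle_dec lam x); auto. exfalso; apply Hn; exists x; split; auto; lra. }
  apply (Un_cv_squeeze _ (fun n => sumR (fun w => if Rle_dec l' (info P n w) then P w else 0) (words M n)) 1%nat); auto.
  intros n Hn. split. apply PrLe_nonneg; auto. apply PrLe_le_spec_up; auto; lra. Qed.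

Lemma SU2 h lam : Hbar M P h -> lam < h -> ~ Un_cv (fun n => PrLe M P n (thr n lam)) 0.
Proof. intros [Hlb Hglb] Hl Hc. assert (h <= lam); [|lra]. apply Hlb.
  unfold spec_up. refine (Un_cv_squeeze _ _ 1%nat _ Hc).
  intros n Hn. split. apply sumR_nonneg; intros w Hw. apply In_words in Hw as [_ Hw].
  pose proof (P_nonneg M P HP w Hw). destruct (Rle_dec _ _); lra.
  apply spec_up_le; auto. Qed.

Lemma thr_pos n k : 0 < thr n k.
Proof. apply exp_pos. Qed.

Lemma SL1 l k : Hund M P l -> k < l -> Un_cv (fun n => PrGt M P n (thr n k)) 0.
Proof. intros [Hub Hlub] Hl.
  assert (exists l', spec_low M P l' /\ k < l') as [l' [Hs Hl']].
  { apply NNPP; intros Hn. assert (l <= k); [|lra]. apply Hlub. intros x Hx.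
    destruct (Rle_dec x k); auto. exfalso; apply Hn; exists x; split; auto; lra. }
  apply (Un_cv_squeeze _ (fun n => sumR (fun w => if Rle_dec (info P n w) l' then P w else 0) (words M n)) 1%nat); auto.
  intros n Hn. split. apply PrGt_nonneg; auto. apply sumR_le; intros w Hw. apply In_words in Hw as [_ Hw].
  pose proof (P_nonneg M P HP w Hw). pose proof (thr_pos n k).
  destruct (Rle_dec (P w) (thr n k)), (Rle_dec (info P n w) l'); try lra.
  exfalso. apply n1. assert (~ (k <= info P n w)). { intros Hc. apply info_ge_iff in Hc; auto; lra. } lra. Qed.

Lemma SL2 l k : Hund M P l -> l < k -> ~ Un_cv (fun n => PrGt M P n (thr n k)) 0.
Proof. intros [Hub Hlub] Hl Hc. assert ((l + k) / 2 <= l); [|lra]. apply Hub.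
  unfold spec_low. refine (Un_cv_squeeze _ _ 1%nat _ Hc).
  intros n Hn. split. apply sumR_nonneg; intros w Hw. apply In_words in Hw as [_ Hw].
  pose proof (P_nonneg M P HP w Hw). destruct (Rle_dec _ _); lra.
  apply sumR_le; intros w Hw. apply In_words in Hw as [_ Hw].
  pose proof (P_nonneg M P HP w Hw). destruct (Req_dec (P w) 0) as [E|E].
  rewrite E. destruct (Rle_dec _ _), (Rle_dec 0 _); lra.
  destruct (Rle_dec (P w) (thr n k)), (Rle_dec (info P n w) ((l + k) / 2)); try lra.
  apply info_ge_iff in r; auto; lra. Qed.
End Spec.

Lemma sum_f_R0_mono f n k : (forall j, 0 <= f j) -> (n <= k)%nat -> sum_f_R0 f n <= sum_f_R0 f k.
Proof. intros Hf Hk. induction Hk. lra. simpl. specialize (Hf (S m)). lra. Qed.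

Lemma partial_le_inf f l n : infinite_sum f l -> (forall j, 0 <= f j) -> sum_f_R0 f n <= l.
Proof. intros Hs Hf. destruct (Rle_dec (sum_f_R0 f n) l) as [|Hn]; auto.
  destruct (Hs (sum_f_R0 f n - l)) as [N HN]. lra.
  specialize (HN (max N n) ltac:(lia)). pose proof (sum_f_R0_mono f n (max N n) Hf ltac:(lia)).
  unfold Rdist in HN. rewrite Rabs_right in HN by lra. lra. Qed.

Lemma valid_firstn M k s : valid M s -> valid M (firstn k s).
Proof. intros H. rewrite <- (firstn_skipn k s) in H. apply valid_app in H; tauto. Qed.

Section Conv.
Variables (MX : nat) (PX : list nat -> R) (MY : nat) (PY : list nat -> R).
Hypothesis HPX : is_process MX PX.
Hypothesis HPY : is_process MY PY.
Variable n : nat.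
Variable phi : algo.
Hypothesis Hg : gen_alg MX PX MY PY n phi.

Lemma fo_out s y : valid MX s -> fo phi s = Some y -> length y = n /\ valid MY y.
Proof. intros Hs Hf. apply fo_spec in Hf as [k [_ Hk]]. destruct Hg as [H1 _].
  apply (H1 (firstn k s)); auto. apply valid_firstn; auto. Qed.

Lemma leaf_mass_to_nonneg y j : 0 <= leaf_mass_to MX PX phi y j.
Proof. apply sumR_nonneg; intros s Hs. apply In_words in Hs as [_ Hs].
  pose proof (P_nonneg MX PX HPX s Hs). destruct (leafb phi s); [|lra].
  destruct (phi s); [|lra]. destruct (list_eq_dec _ _ _); lra. Qed.

Lemma Hto_nonneg y o : 0 <= Hto y o.
Proof. unfold Hto. destruct o; [|lra]. destruct (list_eq_dec _ _ _); lra. Qed.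

Lemma sum_to_le y m : length y = n -> valid MY y ->
  sumR (fun s => Hto y (fo phi s) * PX s) (words MX m) <= PY y.
Proof. intros Hl Hv. rewrite <- leaf_mass_to_decomp by auto. apply partial_le_inf.
  destruct Hg as [_ H2]; auto. apply leaf_mass_to_nonneg. Qed.

Lemma fo_le s y : valid MX s -> fo phi s = Some y -> PX s <= PY y.
Proof. intros Hs Hf. destruct (fo_out s y Hs Hf) as [Hl Hv].
  eapply Rle_trans; [|apply (sum_to_le y (length s)); auto].
  replace (PX s) with (Hto y (fo phi s) * PX s).
  apply (sumR_ge_term (fun s => Hto y (fo phi s) * PX s)). apply In_words; auto.
  intros w Hw. apply In_words in Hw as [_ Hw]. pose proof (P_nonneg MX PX HPX w Hw).
  pose proof (Hto_nonneg y (fo phi w)). nra.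
  rewrite Hf. unfold Hto. destruct (list_eq_dec _ y y); [lra|congruence]. Qed.

Lemma KI0 m d :
  sumR (fun s => Hsome (fo phi s) * PX s) (words MX m) <= PrLe MX PX m d + PrGt MY PY n d.
Proof.
  unfold PrGt.
  rewrite (sumR_ext (fun w => if Rle_dec (PY w) d then 0 else PY w)
     (fun y => (if Rle_dec (PY y) d then 0 else 1) * PY y)) by (intros; destruct (Rle_dec _ _); lra).
  assert (Hb : sumR (fun y => (if Rle_dec (PY y) d then 0 else 1) *
      sumR (fun s => Hto y (fo phi s) * PX s) (words MX m)) (words MY n)
     <= sumR (fun y => (if Rle_dec (PY y) d then 0 else 1) * PY y) (words MY n)).
  { apply sumR_le; intros y Hy. apply In_words in Hy as [Hl Hv]. apply Rmult_le_compat_l.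
    destruct (Rle_dec _ _); lra. apply (sum_to_le y m Hl Hv). }
  eapply Rle_trans; [|apply Rplus_le_compat_l; exact Hb].
  rewrite (sumR_ext (fun y => (if Rle_dec (PY y) d then 0 else 1) *
      sumR (fun s => Hto y (fo phi s) * PX s) (words MX m))
      (fun y => sumR (fun s => (if Rle_dec (PY y) d then 0 else 1) * (Hto y (fo phi s) * PX s)) (words MX m)))
    by (intros; rewrite sumR_scal; auto).
  rewrite <- sumR_swap. unfold PrLe. rewrite <- sumR_plus. apply sumR_le; intros s Hs.
  apply In_words in Hs as [_ Hs]. pose proof (P_nonneg MX PX HPX s Hs).
  destruct (fo phi s) as [y|] eqn:E.
  - destruct (fo_out s y Hs E) as [Hl Hv].
    rewrite (sumR_ext _ (fun y' => if list_eq_dec Nat.eq_dec y' y then (if Rle_dec (PY y') d then 0 else 1) * PX s else 0)).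
    rewrite (delta_words MY n y (fun y' => (if Rle_dec (PY y') d then 0 else 1) * PX s)) by auto.
    pose proof (fo_le s y Hs E). unfold Hsome; simpl.
    destruct (Rle_dec (PY y) d), (Rle_dec (PX s) d); lra.
    intros y' _. unfold Hto. destruct (list_eq_dec Nat.eq_dec y y'), (list_eq_dec Nat.eq_dec y' y); subst; try congruence; lra.
  - unfold Hsome; simpl. rewrite (sumR_ext _ (fun _ => 0)). rewrite sumR_zero.
    destruct (Rle_dec (PX s) d); lra. intros; unfold Hto; lra.
Qed.
End Conv.

Definition mfun (r : R) (n : nat) : nat := pred (Z.to_nat (up (INR n * r))).

Lemma up_pos t : 0 <= t -> (1 <= Z.to_nat (up t))%nat.
Proof. intros. destruct (archimed t) as [H1 H2].
  assert (0 < up t)%Z. { apply lt_IZR. lra. } lia. Qed.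

Lemma INR_up_le t : 0 <= t -> INR (Z.to_nat (up t)) <= t + 1.
Proof. intros. destruct (archimed t) as [H1 H2].
  assert (0 < up t)%Z. { apply lt_IZR. lra. } rewrite INR_IZR_INZ, Z2Nat.id by lia. lra. Qed.

Lemma mfun_S r n : 0 <= INR n * r -> S (mfun r n) = Z.to_nat (up (INR n * r)).
Proof. intros. unfold mfun. pose proof (up_pos _ H). lia. Qed.

Lemma mfun_le r n : 0 <= INR n * r -> INR (mfun r n) <= INR n * r.
Proof. intros. apply up_lt_INR. rewrite <- mfun_S; auto. Qed.

Lemma mfun_gt r n : 0 <= INR n * r -> INR n * r - 1 < INR (mfun r n).
Proof. intros. pose proof (INR_up_gt (INR n * r)). rewrite <- mfun_S in H0 by auto.
  rewrite S_INR in H0. lra. Qed.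

Lemma thr_le m n k l : INR m * k <= INR n * l -> thr n l <= thr m k.
Proof. intros. unfold thr. apply exp_le_iff. pose proof ln2_pos. nra. Qed.

Lemma thr_lt1 n l : (1 <= n)%nat -> 0 < l -> thr n l < 1.
Proof. intros. unfold thr. rewrite <- exp_0. apply exp_increasing.
  assert (1 <= INR n) by (apply (le_INR 1); auto). pose proof ln2_pos.
  assert (0 < INR n * l * ln 2) by (apply Rmult_lt_0_compat; nra). lra. Qed.

Lemma PrLe_mono M P n c c' : is_process M P -> c <= c' -> PrLe M P n c <= PrLe M P n c'.
Proof. intros HP Hc. apply sumR_le; intros w Hw. apply In_words in Hw as [_ Hw].
  pose proof (P_nonneg M P HP w Hw). destruct (Rle_dec (P w) c), (Rle_dec (P w) c'); lra. Qed.

Lemma PrGt_mono_len M P m k c c' : is_process M P -> c <= c' ->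
  PrGt M P (m + k) c' <= PrGt M P m c.
Proof. intros HP Hc. unfold PrGt. rewrite words_split.
  apply sumR_le; intros t Ht. apply In_words in Ht as [_ Ht].
  destruct (Rle_dec (P t) c).
  - rewrite (sumR_ext _ (fun _ => 0)). rewrite sumR_zero; lra. intros u Hu. apply In_words in Hu as [_ Hu].
    assert (Hv : valid M (t ++ u)) by (apply valid_app; auto).
    pose proof (P_prefix_le M P HP t u Hv). destruct (Rle_dec (P (t ++ u)) c'); lra.
  - rewrite <- (P_ext M P HP t k Ht). apply sumR_le; intros u Hu. apply In_words in Hu as [_ Hu].
    assert (Hv : valid M (t ++ u)) by (apply valid_app; auto).
    pose proof (P_nonneg M P HP _ Hv). destruct (Rle_dec (P (t ++ u)) c'); lra. Qed.

Lemma Un_cv_const0 (u : nat -> R) N0 : (forall n, (n >= N0)%nat -> u n = 0) -> Un_cv u 0.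
Proof. intros H eps He. exists N0. intros n Hn. rewrite H by auto. unfold R_dist. rewrite Rminus_0_r, Rabs_R0. lra. Qed.

Section Conv2.
Variables (MX : nat) (PX : list nat -> R) (MY : nat) (PY : list nat -> R).
Hypothesis HPX : is_process MX PX.
Hypothesis HPY : is_process MY PY.

Lemma KI_le n phi r d : gen_alg MX PX MY PY n phi -> 0 <= INR n * r ->
  PrLe MY PY n d <= PrLe MX PX (mfun r n) d + prob_stop_gt MX PX phi (INR n * r).
Proof. intros Hg Hr. unfold prob_stop_gt. rewrite prob_stop_le_eq, <- mfun_S by auto.
  rewrite leaf_mass_decomp by auto. pose proof (KI0 MX PX MY PY HPX n phi Hg (mfun r n) d).
  pose proof (PrLe_Gt MY PY n d HPY). lra. Qed.

Lemma KI_gt n phi r d : gen_alg MX PX MY PY n phi -> 0 <= INR n * r ->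
  PrGt MX PX (mfun r n) d <= PrGt MY PY n d + prob_stop_gt MX PX phi (INR n * r).
Proof. intros Hg Hr. unfold prob_stop_gt. rewrite prob_stop_le_eq, <- mfun_S by auto.
  rewrite leaf_mass_decomp by auto. pose proof (KI0 MX PX MY PY HPX n phi Hg (mfun r n) d).
  pose proof (PrLe_Gt MX PX (mfun r n) d HPX). lra. Qed.

Definition achv (r : R) := exists phi : nat -> algo,
    (forall n, gen_alg MX PX MY PY n (phi n)) /\
    Un_cv (fun n => prob_stop_gt MX PX (phi n) (INR n * r)) 0.

Lemma achv_nonneg r : achv r -> 0 <= r.
Proof. intros [phi [Hg Hc]]. destruct (Rle_dec 0 r); auto. exfalso.
  destruct (Hc (1/2)) as [N HN]. lra. specialize (HN (S N) ltac:(lia)).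
  unfold prob_stop_gt in HN. rewrite prob_stop_le_eq in HN.
  assert (INR (S N) * r < 0). { assert (0 < INR (S N)) by apply lt_0_INR, Nat.lt_0_succ. nra. }
  destruct (archimed (INR (S N) * r)) as [H1 H2].
  assert (up (INR (S N) * r) < 1)%Z. { apply lt_IZR. lra. }
  replace (Z.to_nat (up (INR (S N) * r))) with 0%nat in HN by lia. simpl in HN.
  unfold R_dist, sumR in HN. simpl in HN. rewrite Rminus_0_r, Rminus_0_r, Rabs_R1 in HN. lra. Qed.

Lemma cv_comp (v : nat -> R) (g : nat -> nat) :
  Un_cv v 0 -> (forall K, exists N, forall n, (n >= N)%nat -> (g n >= K)%nat) -> Un_cv (fun n => v (g n)) 0.
Proof. intros Hv Hg eps He. destruct (Hv eps He) as [K HK]. destruct (Hg K) as [N HN].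
  exists N. intros n Hn. apply HK. apply HN; auto. Qed.

Lemma mfun_grow r : 0 < r -> forall K, exists N, forall n, (n >= N)%nat -> (mfun r n >= K)%nat.
Proof. intros Hr K. exists (Z.to_nat (up ((INR K + 1) / r))). intros n Hn.
  pose proof (INR_up_gt ((INR K + 1) / r)). apply le_INR in Hn.
  assert (Hnr : INR n * r > INR K + 1).
  { assert (H0 : INR n > (INR K + 1) / r) by lra.
    apply (Rmult_gt_compat_r r) in H0; auto. unfold Rdiv in H0. rewrite Rmult_assoc, Rinv_l in H0; lra. }
  pose proof (pos_INR K).
  pose proof (mfun_gt r n ltac:(lra)). assert (H3 : INR K < INR (mfun r n)) by lra.
  apply INR_lt in H3. lia. Qed.

Theorem conv1 hX hY r : Hbar MX PX hX -> hX > 0 -> Hbar MY PY hY -> achv r -> hY / hX <= r.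
Proof. intros HbX HhX HbY Ha. pose proof (achv_nonneg r Ha) as Hr0.
  destruct Ha as [phi [Hg Hc]].
  destruct (Rle_dec (hY / hX) r) as [|Hlt]; auto. exfalso.
  assert (Hlt' : r * hX < hY). { assert (r < hY / hX) by lra.
    apply (Rmult_lt_compat_r hX) in H; auto. unfold Rdiv in H. rewrite Rmult_assoc, Rinv_l in H; lra. }
  set (lam := (r * hX + hY) / 2).
  set (kap := hX + (lam - r * hX) / (2 * (r + 1))).
  assert (Hlam : r * hX < lam < hY) by (unfold lam; lra).
  assert (Hk1 : hX < kap). { assert (0 < (lam - r*hX)/(2*(r+1))) by (apply Rdiv_lt_0_compat; lra).
    unfold kap; lra. }
  assert (Hk2 : r * kap <= lam). { unfold kap.
    assert (r * ((lam - r * hX) / (2 * (r + 1))) <= lam - r * hX).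
    { unfold Rdiv. rewrite <- Rmult_assoc. apply (Rmult_le_reg_r (2 * (r+1))). lra.
      rewrite Rmult_assoc, Rinv_l by lra. nra. }
    nra. }
  apply (SU2 MY PY HPY hY lam HbY ltac:(lra)).
  assert (Ha : Un_cv (fun n => PrLe MX PX (mfun r n) (thr n lam)) 0).
  { destruct (Req_dec r 0) as [E|E].
    - subst r. apply (Un_cv_const0 _ 1%nat). intros n Hn.
      assert (Hm : mfun 0 n = 0%nat). { pose proof (mfun_le 0 n) as H. rewrite Rmult_0_r in H.
        specialize (H (Rle_refl 0)). pose proof (pos_INR (mfun 0 n)). apply INR_eq. simpl. lra. }
      rewrite Hm. unfold PrLe. simpl. unfold sumR; simpl. destruct HPX as [H0 _]. rewrite H0.
      pose proof (thr_lt1 n lam Hn ltac:(lra)). destruct (Rle_dec 1 _); lra.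
    - apply (Un_cv_squeeze _ (fun n => PrLe MX PX (mfun r n) (thr (mfun r n) kap)) 0%nat).
      + intros n _. split. apply PrLe_nonneg; auto. apply PrLe_mono; auto. apply thr_le.
        pose proof (pos_INR n). pose proof (mfun_le r n ltac:(nra)).
        assert (INR (mfun r n) * kap <= INR n * r * kap) by (apply Rmult_le_compat_r; lra). nra.
      + apply (cv_comp (fun m => PrLe MX PX m (thr m kap))). apply (SU1 MX PX HPX hX); auto.
        apply mfun_grow; lra. }
  apply (Un_cv_squeeze _ (fun n => PrLe MX PX (mfun r n) (thr n lam) + prob_stop_gt MX PX (phi n) (INR n * r)) 0%nat).
  - intros n _. split. apply PrLe_nonneg; auto. apply KI_le; auto. pose proof (pos_INR n); nra.
  - replace 0 with (0 + 0) by lra. apply CV_plus; auto.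
Qed.

Theorem conv2 hY lX r : Hund MY PY hY -> Hund MX PX lX -> lX > 0 -> achv r -> hY / lX <= r.
Proof. intros HuY HuX HlX Ha. pose proof (achv_nonneg r Ha) as Hr0.
  destruct Ha as [phi [Hg Hc]].
  destruct (Rle_dec (hY / lX) r) as [|Hlt]; auto. exfalso.
  assert (Hlt' : r * lX < hY). { assert (r < hY / lX) by lra.
    apply (Rmult_lt_compat_r lX) in H; auto. unfold Rdiv in H. rewrite Rmult_assoc, Rinv_l in H; lra. }
  set (lam := (r * lX + hY) / 2).
  set (d := (lam - r * lX) / (2 * (r + 1))).
  set (kap := lX + d).
  assert (Hlam : r * lX < lam < hY) by (unfold lam; lra).
  assert (Hd : 0 < d) by (apply Rdiv_lt_0_compat; lra).
  assert (Hrd : r * d <= (lam - r * lX) / 2).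
  { unfold d. unfold Rdiv. rewrite <- Rmult_assoc. apply (Rmult_le_reg_r (2 * (r+1))). lra.
    rewrite Rmult_assoc, Rinv_l by lra. nra. }
  assert (Hk2 : r * kap < lam) by (unfold kap; nra).
  assert (Hlam0 : 0 < lam) by nra.
  set (q := kap / lam).
  assert (Hq : q * lam = kap) by (unfold q; field; lra).
  assert (Hq0 : 0 < q) by (unfold q, kap; apply Rdiv_lt_0_compat; lra).
  assert (Hrq : r * q < 1). { apply (Rmult_lt_reg_r lam); auto. rewrite Rmult_assoc, Hq. lra. }
  apply (SL2 MX PX HPX lX kap HuX ltac:(unfold kap; lra)).
  assert (Hcn : Un_cv (fun n => PrGt MY PY n (thr n lam) + prob_stop_gt MX PX (phi n) (INR n * r)) 0).
  { replace 0 with (0 + 0) by lra. apply CV_plus; auto. apply (SL1 MY PY HPY hY); auto; lra. }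
  intros eps Heps. destruct (Hcn eps Heps) as [N HN].
  set (B := Rmax (INR N / q) (r / (1 - r * q))).
  exists (Z.to_nat (up B)). intros M HM.
  assert (HMB : B < INR M). { pose proof (INR_up_gt B). apply le_INR in HM. lra. }
  assert (HB1 : INR N / q <= B) by apply Rmax_l.
  assert (HB2 : r / (1 - r * q) <= B) by apply Rmax_r.
  pose proof (pos_INR M) as HM0. pose proof (pos_INR N) as HN0.
  set (n := Z.to_nat (up (INR M * q))).
  assert (Hn1 : INR M * q < INR n) by apply INR_up_gt.
  assert (Hn2 : INR n <= INR M * q + 1) by (apply INR_up_le; nra).
  assert (HnN : (n >= N)%nat).
  { assert (INR N <= B * q). { apply (Rmult_le_compat_r q) in HB1; [|lra].
      unfold Rdiv in HB1. rewrite Rmult_assoc, Rinv_l in HB1; lra. }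
    assert (INR N < INR n) by nra. apply INR_lt in H0. lia. }
  assert (Hnr : INR n * r <= INR M).
  { assert (r <= INR M * (1 - r * q)). { apply (Rmult_le_compat_r (1 - r*q)) in HB2; [|lra].
      unfold Rdiv in HB2. rewrite Rmult_assoc, Rinv_l in HB2; nra. }
    nra. }
  assert (Hnr0 : 0 <= INR n * r) by (pose proof (pos_INR n); nra).
  assert (Hmle : (mfun r n <= M)%nat). { pose proof (mfun_le r n Hnr0). apply INR_le. lra. }
  specialize (HN n HnN). unfold R_dist in *. rewrite Rminus_0_r in *.
  pose proof (PrGt_nonneg MX PX M (thr M kap) HPX) as Hg0. rewrite Rabs_right by lra.
  assert (Hc1 : PrGt MX PX M (thr M kap) <= PrGt MX PX (mfun r n) (thr n lam)).
  { replace M with (mfun r n + (M - mfun r n))%nat at 1 by lia. apply PrGt_mono_len; auto.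
    apply thr_le. rewrite <- Hq. nra. }
  pose proof (KI_gt n (phi n) r (thr n lam) (Hg n) Hnr0).
  pose proof (Rle_abs (PrGt MY PY n (thr n lam) + prob_stop_gt MX PX (phi n) (INR n * r))). lra.
Qed.
End Conv2.

Lemma fo_some phi s z : phi s = Some z -> is_some (fo phi s) = true.
Proof. revert phi; induction s as [|x r IH]; intros phi H; simpl. rewrite H; auto.
  destruct (phi []); auto. Qed.

Definition W (e p : R) : R * R := (Rmax 0 (p - e), Rmin 1 (p + e)).

Lemma subsetb_closed a p c q : subsetb (a, a + p) (c, c + q) = true -> 0 < p -> c <= a /\ a + p <= c + q.
Proof. unfold subsetb. intros H Hp. destruct (Rle_dec (a + p) a); [lra|].
  destruct (Rle_dec c a); [|discriminate]. destruct (Rle_dec (a + p) (c + q)); [|discriminate]. auto. Qed.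

Lemma subsetb_closed' a p c q : 0 < p -> c <= a -> a + p <= c + q -> subsetb (a, a + p) (c, c + q) = true.
Proof. unfold subsetb. intros Hp H1 H2. destruct (Rle_dec (a + p) a); [lra|].
  destruct (Rle_dec c a); [|lra]. destruct (Rle_dec (a + p) (c + q)); [|lra]. auto. Qed.

Section Ach.
Variables (MX : nat) (PX : list nat -> R) (MY : nat) (PY : list nat -> R).
Hypothesis HPX : is_process MX PX.
Hypothesis HPY : is_process MY PY.

Notation phiI n := (interval_alg PX MY PY n).

Definition wv (e p a b : R) : R := ov a b (Rmax 0 (p - e)) (Rmin 1 (p + e)).

Lemma wv_sum e p m : 0 <= p <= 1 -> 0 < e ->
  sumR (fun s => wv e p (lft PX s) (lft PX s + PX s)) (words MX m) <= 2 * e.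
Proof. intros Hp He. unfold wv.
  rewrite (sumR_ext _ (fun s => ov (Rmax 0 (p - e)) (Rmin 1 (p + e)) (lft PX s) (lft PX s + PX s)))
    by (intros; apply ov_sym).
  rewrite (ov_sum MX PX HPX). unfold Rmax, Rmin; dest_all; lra.
  unfold Rmax, Rmin; dest_all; lra. unfold Rmin; dest_all; lra. Qed.

Lemma ov_J_sum c d m : 0 <= c <= d -> d <= 1 ->
  sumR (fun s => ov (lft PX s) (lft PX s + PX s) c d) (words MX m) = d - c.
Proof. intros. rewrite (sumR_ext _ (fun s => ov c d (lft PX s) (lft PX s + PX s)))
    by (intros; apply ov_sym). apply (ov_sum MX PX HPX); auto. Qed.

Definition Fb (n : nat) (e del a b : R) : R :=
  sumR (fun y => (if Rle_dec (PY y) del then ov a b (lft PY y) (lft PY y + PY y) else 0) +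
                 (if Rle_dec (PY y) del then 0 else
                    wv e (lft PY y) a b + wv e (lft PY y + PY y) a b)) (words MY n).

Lemma Fb_nonneg n e del a b : 0 <= Fb n e del a b.
Proof. apply sumR_nonneg; intros. unfold wv.
  pose proof (ov_nonneg a b (lft PY x) (lft PY x + PY x)).
  pose proof (ov_nonneg a b (Rmax 0 (lft PY x - e)) (Rmin 1 (lft PY x + e))).
  pose proof (ov_nonneg a b (Rmax 0 (lft PY x + PY x - e)) (Rmin 1 (lft PY x + PY x + e))).
  destruct (Rle_dec _ _); lra. Qed.

Lemma pw n e del s : 0 < e -> valid MX s ->
  (if is_some (phiI n s) then 0 else 1) * PX s <=
  (if Rle_dec (PX s) e then 0 else PX s) + Fb n e del (lft PX s) (lft PX s + PX s).
Proof. intros He Hs. pose proof (Fb_nonneg n e del (lft PX s) (lft PX s + PX s)).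
  pose proof (P_nonneg MX PX HPX s Hs).
  destruct (phiI n s) eqn:E; simpl. destruct (Rle_dec (PX s) e); lra.
  destruct (Rle_dec (PX s) e) as [Hle|]; [|lra].
  destruct (Req_dec (PX s) 0) as [Z|Z]. assert (1 * PX s = 0) by (rewrite Z; ring). lra.
  rewrite Rmult_1_l, Rplus_0_l.
  set (a := lft PX s). set (b := a + PX s).
  pose proof (lft_nonneg MX PX HPX s Hs) as Ha0. pose proof (lft_bound MX PX HPX s Hs) as Hb1.
  fold a in Ha0, Hb1.
  assert (Hsum : sumR (fun y => ov a b (lft PY y) (lft PY y + PY y)) (words MY n) = b - a)
    by (apply (ov_sum MY PY HPY); unfold b; lra).
  replace (PX s) with (b - a) by (unfold b; lra). rewrite <- Hsum.
  unfold Fb. apply sumR_le. intros y Hy.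
  assert (Hsub : subsetb (interval PX s) (interval PY y) = false).
  { unfold interval_alg in E. apply (find_none _ _ E); auto. }
  apply In_words in Hy as [_ Hy].
  rewrite (interval_closed MX PX HPX s Hs), (interval_closed MY PY HPY y Hy) in Hsub.
  pose proof (lft_nonneg MY PY HPY y Hy). pose proof (lft_bound MY PY HPY y Hy).
  pose proof (P_nonneg MY PY HPY y Hy).
  set (c := lft PY y) in *. set (d := c + PY y) in *.
  unfold wv. fold d.
  pose proof (ov_nonneg a b c d).
  pose proof (ov_nonneg a b (Rmax 0 (c - e)) (Rmin 1 (c + e))).
  pose proof (ov_nonneg a b (Rmax 0 (d - e)) (Rmin 1 (d + e))).
  destruct (Rle_dec (PY y) del). lra.
  rewrite Rplus_0_l.
  destruct (Req_dec (ov a b c d) 0) as [Z2|Z2]. lra.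
  assert (Hnot : ~ (c <= a /\ b <= d)).
  { intros [Hq1 Hq2]. assert (Hst : subsetb (a, a + PX s) (c, c + PY y) = true).
    apply subsetb_closed'; auto; unfold b, d in *; lra.
    unfold a in Hst. fold d in Hst. congruence. }
  destruct (ov_strad a b c d ltac:(unfold b; lra) ltac:(unfold d; lra) ltac:(lra) Hnot) as [Hc|Hd].
  - pose proof (ov_le a b c d ltac:(unfold b; lra)).
    rewrite (ov_in a b (Rmax 0 (c - e)) (Rmin 1 (c + e))); [lra| unfold b; lra | |].
    unfold Rmax; dest_all; unfold b in *; lra. unfold Rmin; dest_all; unfold b in *; lra.
  - pose proof (ov_le a b c d ltac:(unfold b; lra)).
    rewrite (ov_in a b (Rmax 0 (d - e)) (Rmin 1 (d + e))); [lra| unfold b; lra | |].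
    unfold Rmax; dest_all; unfold b in *; lra. unfold Rmin; dest_all; unfold b in *; lra.
Qed.

Lemma bad_sum n m e del : 0 < e -> 0 < del ->
  sumR (fun s => (if is_some (phiI n s) then 0 else 1) * PX s) (words MX m)
  <= PrGt MX PX m e + PrLe MY PY n del + 4 * e / del.
Proof. intros He Hd.
  eapply Rle_trans. apply sumR_le; intros s Hs. apply In_words in Hs as [_ Hs]. apply (pw n e del s He Hs).
  rewrite sumR_plus. rewrite Rplus_assoc. apply Rplus_le_compat_l.
  unfold Fb. rewrite sumR_swap.
  assert (Htot : sumR PY (words MY n) = 1) by apply (P_total MY PY HPY).
  eapply Rle_trans with (sumR (fun y => (if Rle_dec (PY y) del then PY y else 0) + 4 * e / del * PY y) (words MY n)).
  - apply sumR_le; intros y Hy. apply In_words in Hy as [_ Hy].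
    pose proof (lft_nonneg MY PY HPY y Hy). pose proof (lft_bound MY PY HPY y Hy).
    pose proof (P_nonneg MY PY HPY y Hy).
    rewrite sumR_plus. destruct (Rle_dec (PY y) del).
    + rewrite sumR_zero, (ov_J_sum (lft PY y) (lft PY y + PY y) m) by lra.
      assert (0 <= 4 * e / del * PY y). { apply Rmult_le_pos; auto. unfold Rdiv. apply Rmult_le_pos. lra. left; apply Rinv_0_lt_compat; auto. }
      lra.
    + rewrite sumR_zero, sumR_plus.
      pose proof (wv_sum e (lft PY y) m ltac:(lra) He).
      pose proof (wv_sum e (lft PY y + PY y) m ltac:(lra) He).
      assert (4 * e <= 4 * e / del * PY y).
      { assert (Hq : 1 <= PY y / del). { apply (Rmult_le_reg_l del); auto.
          unfold Rdiv. rewrite <- Rmult_assoc, (Rmult_comm del (PY y)), Rmult_assoc, Rinv_r by lra. lra. }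
        replace (4 * e / del * PY y) with (4 * e * (PY y / del)) by (field; lra). nra. }
      lra.
  - rewrite sumR_plus, sumR_scal, Htot. unfold PrLe. lra.
Qed.
End Ach.

Lemma exp_small eps : 0 < eps -> exists Y, forall y, Y <= y -> exp (- y) < eps.
Proof. intros He. exists (/ eps). intros y Hy.
  assert (0 < y) by (pose proof (Rinv_0_lt_compat eps He); lra).
  pose proof (exp_ineq1_le y). pose proof (exp_pos y).
  rewrite exp_Ropp. apply (Rmult_lt_reg_r (exp y)); auto. rewrite Rinv_l by lra.
  assert (1 < eps * (1 + y)). { assert (eps * y >= 1).
    { apply Rle_ge. apply (Rmult_le_reg_l (/ eps)). apply Rinv_0_lt_compat; auto.
      rewrite <- Rmult_assoc, Rinv_l by lra. lra. } nra. }
  nra. Qed.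

Lemma Hbar_nonneg M P h : is_process M P -> Hbar M P h -> 0 <= h.
Proof. intros HP [Hlb Hglb]. apply Hglb. intros x Hx. destruct (Rle_dec 0 x); auto. exfalso.
  destruct (Hx (1/2)) as [N HN]. lra. specialize (HN (S N) ltac:(lia)).
  rewrite (sumR_ext _ P) in HN. rewrite (P_total M P HP) in HN. unfold R_dist in HN.
  rewrite Rminus_0_r, Rabs_R1 in HN. lra.
  intros w Hw. apply In_words in Hw as [_ Hw]. pose proof (P_nonneg M P HP w Hw).
  destruct (Req_dec (P w) 0) as [Z|Z]. rewrite Z. destruct (Rle_dec _ _); auto.
  destruct (Rle_dec x (info P (S N) w)); auto. exfalso. apply n0.
  assert (0 <= info P (S N) w). { apply info_ge_iff; auto. lia. lra.
    unfold thr. rewrite Rmult_0_r, Rmult_0_l, Ropp_0, exp_0. apply (P_le1 M P HP); auto. }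
  lra. Qed.

Section Ach2.
Variables (MX : nat) (PX : list nat -> R) (MY : nat) (PY : list nat -> R).
Hypothesis HPX : is_process MX PX.
Hypothesis HPY : is_process MY PY.

Lemma gt_bound n r : 0 <= INR n * r ->
  prob_stop_gt MX PX (interval_alg PX MY PY n) (INR n * r) <=
  sumR (fun s => (if is_some (interval_alg PX MY PY n s) then 0 else 1) * PX s) (words MX (mfun r n)).
Proof. intros Hr. unfold prob_stop_gt. rewrite prob_stop_le_eq, <- mfun_S by auto.
  rewrite leaf_mass_decomp by auto. rewrite <- (P_total MX PX HPX (mfun r n)) at 1. rewrite <- sumR_minus.
  apply sumR_le; intros s Hs. apply In_words in Hs as [_ Hs]. pose proof (P_nonneg MX PX HPX s Hs).
  unfold Hsome. destruct (interval_alg PX MY PY n s) eqn:E; simpl.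
  rewrite (fo_some _ _ _ E). lra.
  destruct (is_some (fo _ s)); lra. Qed.

Lemma gt_nonneg phi t : 0 <= prob_stop_gt MX PX phi t.
Proof. unfold prob_stop_gt. rewrite prob_stop_le_eq.
  destruct (Z.to_nat (up t)) as [|m]. unfold sumR; simpl; lra.
  rewrite leaf_mass_decomp by auto. rewrite <- (P_total MX PX HPX m).
  assert (sumR (fun s => Hsome (fo phi s) * PX s) (words MX m) <= sumR PX (words MX m)); [|lra].
  apply sumR_le; intros s Hs. apply In_words in Hs as [_ Hs]. pose proof (P_nonneg MX PX HPX s Hs).
  unfold Hsome. destruct (is_some _); lra. Qed.

Theorem ach hY lX r : Hbar MY PY hY -> Hund MX PX lX -> lX > 0 -> r > hY / lX ->
  Un_cv (fun n => prob_stop_gt MX PX (interval_alg PX MY PY n) (INR n * r)) 0.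
Proof. intros HbY HuX HlX Hr.
  pose proof (Hbar_nonneg MY PY hY HPY HbY) as HhY.
  assert (Hr0 : 0 < r). { assert (0 <= hY / lX) by (apply Rmult_le_pos; auto; left; apply Rinv_0_lt_compat; lra). lra. }
  assert (Hlt : hY < r * lX). { assert (hY / lX < r) by lra.
    apply (Rmult_lt_compat_r lX) in H; auto. unfold Rdiv in H. rewrite Rmult_assoc, Rinv_l in H; lra. }
  set (lam := (hY + r * lX) / 2).
  assert (Hlam : hY < lam < r * lX) by (unfold lam; lra).
  set (kap := (lX + lam / r) / 2).
  assert (Hlr : lam / r < lX). { apply (Rmult_lt_reg_r r); auto. unfold Rdiv. rewrite Rmult_assoc, Rinv_l; lra. }
  assert (Hlr0 : 0 < lam / r) by (apply Rdiv_lt_0_compat; lra).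
  assert (Hk : lam / r < kap < lX) by (unfold kap; lra).
  assert (Hrk : lam < r * kap). { assert (lam = r * (lam / r)) by (field; lra). nra. }
  set (g := fun n => PrGt MX PX (mfun r n) (thr (mfun r n) kap) + PrLe MY PY n (thr n lam)
                     + 4 * thr (mfun r n) kap / thr n lam).
  apply (Un_cv_squeeze _ g 1%nat).
  - intros n Hn. split. apply gt_nonneg. pose proof (pos_INR n).
    eapply Rle_trans. apply gt_bound. nra. apply bad_sum; auto; apply thr_pos.
  - unfold g. replace 0 with (0 + 0 + 0) by lra. apply CV_plus. apply CV_plus.
    + apply (cv_comp (fun m => PrGt MX PX m (thr m kap))). apply (SL1 MX PX HPX lX); auto; lra.
      apply mfun_grow; lra.
    + apply (SU1 MY PY HPY hY); auto; lra.
    + intros eps He. destruct (exp_small (eps / 4)) as [Y HY]. lra.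
      set (c := r * kap - lam).
      exists (Z.to_nat (up ((Rmax 0 Y / ln 2 + kap) / c))). intros n Hn.
      pose proof (INR_up_gt ((Rmax 0 Y / ln 2 + kap) / c)). apply le_INR in Hn.
      assert (Hc : 0 < c) by (unfold c; lra).
      assert (HnB : (Rmax 0 Y / ln 2 + kap) < INR n * c).
      { assert (INR n > (Rmax 0 Y / ln 2 + kap) / c) by lra.
        apply (Rmult_gt_compat_r c) in H0; auto. unfold Rdiv in H0. rewrite Rmult_assoc, Rinv_l in H0; lra. }
      pose proof ln2_pos. assert (HY0 : 0 <= Rmax 0 Y) by apply Rmax_l. assert (HYY : Y <= Rmax 0 Y) by apply Rmax_r.
      assert (Hnr : 0 <= INR n * r). { assert (0 <= Rmax 0 Y / ln 2) by (unfold Rdiv; apply Rmult_le_pos; [lra | left; apply Rinv_0_lt_compat; lra]). nra. }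
      pose proof (mfun_gt r n Hnr) as Hm.
      assert (Heq : 4 * thr (mfun r n) kap / thr n lam = 4 * exp (- ((INR (mfun r n) * kap - INR n * lam) * ln 2))).
      { unfold thr, Rdiv. rewrite <- exp_Ropp, Rmult_assoc, <- exp_plus. f_equal. f_equal. ring. }
      unfold R_dist. rewrite Rminus_0_r, Heq, Rabs_right.
      2: { pose proof (exp_pos (- ((INR (mfun r n) * kap - INR n * lam) * ln 2))). lra. }
      assert (HYb : Y <= (INR (mfun r n) * kap - INR n * lam) * ln 2).
      { assert (H2 : Rmax 0 Y / ln 2 < INR (mfun r n) * kap - INR n * lam).
        { assert (INR n * r * kap - kap < INR (mfun r n) * kap) by (apply (Rmult_lt_compat_r kap) in Hm; lra).
          unfold c in HnB. nra. }
        apply (Rmult_lt_compat_r (ln 2)) in H2; auto. unfold Rdiv in H2.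
        rewrite Rmult_assoc, Rinv_l in H2; lra. }
      specialize (HY _ HYb). lra.
Qed.
End Ach2.

Lemma neq_pos x : 0 <= x -> x <> 0 -> 0 < x.
Proof. intros [H|H] Hn; auto. exfalso; apply Hn; auto. Qed.

Section Valid.
Variables (MX : nat) (PX : list nat -> R) (MY : nat) (PY : list nat -> R).
Hypothesis HPX : is_process MX PX.
Hypothesis HPY : is_process MY PY.
Variable n : nat.
Notation phi := (interval_alg PX MY PY n).

Lemma phi_out s y : phi s = Some y -> In y (words MY n) /\
   subsetb (interval PX s) (interval PY y) = true.
Proof. intros H. unfold interval_alg in H. apply find_some in H. auto. Qed.

Lemma two_terms (f : list nat -> R) y1 y2 : In y1 (words MY n) -> In y2 (words MY n) -> y1 <> y2 ->
  (forall y, In y (words MY n) -> 0 <= f y) -> f y1 + f y2 <= sumR f (words MY n).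
Proof. intros H1 H2 Hne Hf. apply In_words in H1 as [L1 V1]. apply In_words in H2 as [L2 V2].
  rewrite <- (delta_words MY n y1 f L1 V1), <- (delta_words MY n y2 f L2 V2), <- sumR_plus.
  apply sumR_le; intros y Hy. pose proof (Hf y Hy).
  destruct (list_eq_dec Nat.eq_dec y y1), (list_eq_dec Nat.eq_dec y y2); subst; try congruence; lra. Qed.

Lemma fo_contained s y : valid MX s -> 0 < PX s -> fo phi s = Some y ->
  In y (words MY n) /\ lft PY y <= lft PX s /\ lft PX s + PX s <= lft PY y + PY y.
Proof. intros Hs Hp Hf. apply fo_spec in Hf as [k [Hk Hk2]]. apply phi_out in Hk2 as [Hin Hsub].
  split; auto. apply In_words in Hin as [_ Hy].
  set (s' := firstn k s) in *. assert (Hs' : valid MX s') by (apply valid_firstn; auto).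
  assert (Happ : s = s' ++ skipn k s) by (symmetry; apply firstn_skipn).
  pose proof (lft_nest MX PX HPX s' (skipn k s) ltac:(rewrite <- Happ; auto)) as [N1 N2].
  rewrite <- Happ in N1, N2.
  rewrite (interval_closed MX PX HPX s' Hs'), (interval_closed MY PY HPY y Hy) in Hsub.
  apply subsetb_closed in Hsub as [S1 S2]. lra. lra. Qed.

Lemma contained_fo s y : valid MX s -> 0 < PX s -> In y (words MY n) ->
  lft PY y <= lft PX s -> lft PX s + PX s <= lft PY y + PY y -> fo phi s = Some y.
Proof. intros Hs Hp Hin H1 H2.
  assert (Hsome : exists z, phi s = Some z).
  { unfold interval_alg. destruct (find _ _) eqn:E. eauto. exfalso.
    pose proof (find_none _ _ E y Hin). apply In_words in Hin as [_ Hy].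
    rewrite (interval_closed MX PX HPX s Hs), (interval_closed MY PY HPY y Hy) in H.
    rewrite subsetb_closed' in H; auto; discriminate. }
  destruct Hsome as [z Hz]. pose proof (fo_some _ _ _ Hz) as Hfs.
  destruct (fo phi s) as [y'|] eqn:E; [|discriminate].
  destruct (fo_contained s y' Hs Hp E) as [Hin' [C1 C2]].
  destruct (list_eq_dec Nat.eq_dec y' y) as [->|Hne]; auto. exfalso.
  pose proof (lft_nonneg MX PX HPX s Hs) as A0. pose proof (lft_bound MX PX HPX s Hs) as A1.
  pose proof (two_terms (fun y0 => ov (lft PX s) (lft PX s + PX s) (lft PY y0) (lft PY y0 + PY y0))
     y y' Hin Hin' (fun e => Hne (eq_sym e)) (fun _ _ => ov_nonneg _ _ _ _)).
  rewrite (ov_sum MY PY HPY) in H by lra.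
  rewrite !ov_in in H by lra. lra. Qed.

Lemma upper s y : valid MX s -> In y (words MY n) ->
  Hto y (fo phi s) * PX s <= ov (lft PX s) (lft PX s + PX s) (lft PY y) (lft PY y + PY y).
Proof. intros Hs Hin. pose proof (ov_nonneg (lft PX s) (lft PX s + PX s) (lft PY y) (lft PY y + PY y)).
  pose proof (P_nonneg MX PX HPX s Hs).
  unfold Hto. destruct (fo phi s) as [y'|] eqn:E; [|lra].
  destruct (list_eq_dec Nat.eq_dec y' y) as [->|]; [|lra].
  destruct (Req_dec (PX s) 0) as [Z|Z]. assert (1 * PX s = 0) by (rewrite Z; ring). lra.
  destruct (fo_contained s y Hs ltac:(lra) E) as [_ [C1 C2]].
  rewrite ov_in; lra. Qed.

Lemma lower s y e : valid MX s -> In y (words MY n) -> 0 < e ->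
  ov (lft PX s) (lft PX s + PX s) (lft PY y) (lft PY y + PY y) - Hto y (fo phi s) * PX s
  <= (if Rle_dec (PX s) e then 0 else PX s) + wv e (lft PY y) (lft PX s) (lft PX s + PX s)
     + wv e (lft PY y + PY y) (lft PX s) (lft PX s + PX s).
Proof. intros Hs Hin He. pose proof (P_nonneg MX PX HPX s Hs).
  assert (Hy : valid MY y) by (apply In_words in Hin; tauto).
  pose proof (lft_nonneg MX PX HPX s Hs) as A0. pose proof (lft_bound MX PX HPX s Hs) as A1.
  pose proof (lft_nonneg MY PY HPY y Hy). pose proof (lft_bound MY PY HPY y Hy).
  pose proof (P_nonneg MY PY HPY y Hy).
  set (a := lft PX s) in *. set (b := a + PX s). set (c := lft PY y) in *. set (d := c + PY y).
  unfold wv.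
  pose proof (ov_nonneg a b (Rmax 0 (c - e)) (Rmin 1 (c + e))).
  pose proof (ov_nonneg a b (Rmax 0 (d - e)) (Rmin 1 (d + e))).
  pose proof (ov_le a b c d ltac:(unfold b; lra)).
  assert (0 <= Hto y (fo phi s)) by apply Hto_nonneg.
  assert (0 <= Hto y (fo phi s) * PX s) by nra.
  destruct (Req_dec (PX s) 0) as [Z|Z].
  { unfold b in *. rewrite Z in *. destruct (Rle_dec 0 e); lra. }
  destruct (Rle_dec (PX s) e); [|unfold b in *; lra].
  assert (Hp : 0 < PX s) by (destruct H as [Hq|Hq]; [auto | exfalso; apply Z; auto]).
  destruct (Rle_dec c a), (Rle_dec b d).
  - assert (Hfo : fo phi s = Some y) by (apply contained_fo; auto; unfold b, d in *; lra). rewrite Hfo.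
    unfold Hto. destruct (list_eq_dec Nat.eq_dec y y); [|congruence]. unfold b in *. lra.
  - destruct (Req_dec (ov a b c d) 0) as [Z2|Z2]. lra.
    destruct (ov_strad a b c d ltac:(unfold b; lra) ltac:(unfold d; lra) (neq_pos _ (ov_nonneg a b c d) Z2) ltac:(tauto)) as [Hc|Hd].
    + rewrite (ov_in a b (Rmax 0 (c - e)) (Rmin 1 (c + e))); [lra| unfold b; lra | |].
      unfold Rmax; dest_all; unfold b in *; lra. unfold Rmin; dest_all; unfold b in *; lra.
    + rewrite (ov_in a b (Rmax 0 (d - e)) (Rmin 1 (d + e))); [lra| unfold b; lra | |].
      unfold Rmax; dest_all; unfold b in *; lra. unfold Rmin; dest_all; unfold b in *; lra.
  - destruct (Req_dec (ov a b c d) 0) as [Z2|Z2]. lra.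
    destruct (ov_strad a b c d ltac:(unfold b; lra) ltac:(unfold d; lra) (neq_pos _ (ov_nonneg a b c d) Z2) ltac:(tauto)) as [Hc|Hd].
    + rewrite (ov_in a b (Rmax 0 (c - e)) (Rmin 1 (c + e))); [lra| unfold b; lra | |].
      unfold Rmax; dest_all; unfold b in *; lra. unfold Rmin; dest_all; unfold b in *; lra.
    + rewrite (ov_in a b (Rmax 0 (d - e)) (Rmin 1 (d + e))); [lra| unfold b; lra | |].
      unfold Rmax; dest_all; unfold b in *; lra. unfold Rmin; dest_all; unfold b in *; lra.
  - destruct (Req_dec (ov a b c d) 0) as [Z2|Z2]. lra.
    destruct (ov_strad a b c d ltac:(unfold b; lra) ltac:(unfold d; lra) (neq_pos _ (ov_nonneg a b c d) Z2) ltac:(tauto)) as [Hc|Hd].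
    + rewrite (ov_in a b (Rmax 0 (c - e)) (Rmin 1 (c + e))); [lra| unfold b; lra | |].
      unfold Rmax; dest_all; unfold b in *; lra. unfold Rmin; dest_all; unfold b in *; lra.
    + rewrite (ov_in a b (Rmax 0 (d - e)) (Rmin 1 (d + e))); [lra| unfold b; lra | |].
      unfold Rmax; dest_all; unfold b in *; lra. unfold Rmin; dest_all; unfold b in *; lra.
Qed.

Lemma thr_cv k : 0 < k -> Un_cv (fun m => thr m k) 0.
Proof. intros Hk eps He. destruct (exp_small eps He) as [Y HY]. pose proof ln2_pos.
  exists (Z.to_nat (up (Rmax 0 Y / (k * ln 2)))). intros m Hm.
  pose proof (INR_up_gt (Rmax 0 Y / (k * ln 2))). apply le_INR in Hm.
  assert (Hkl : 0 < k * ln 2) by (apply Rmult_lt_0_compat; auto).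
  assert (Y <= INR m * k * ln 2).
  { assert (Rmax 0 Y / (k * ln 2) < INR m) by lra.
    apply (Rmult_lt_compat_r (k * ln 2)) in H1; auto. unfold Rdiv in H1.
    rewrite Rmult_assoc, Rinv_l in H1 by lra. pose proof (Rmax_r 0 Y). nra. }
  unfold R_dist, thr. rewrite Rminus_0_r, Rabs_right. apply HY; auto.
  left; apply exp_pos. Qed.

Theorem int_valid lX : Hund MX PX lX -> lX > 0 -> gen_alg MX PX MY PY n phi.
Proof. intros HuX HlX. split.
  - intros s y Hs H. apply phi_out in H as [Hin _]. apply In_words in Hin; auto.
  - intros y Hl Hv. assert (Hin : In y (words MY n)) by (apply In_words; auto).
    pose proof (lft_nonneg MY PY HPY y Hv). pose proof (lft_bound MY PY HPY y Hv).
    pose proof (P_nonneg MY PY HPY y Hv).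
    set (k := lX / 2).
    assert (Hk : 0 < k < lX) by (unfold k; lra).
    assert (Hc : Un_cv (fun m => PrGt MX PX m (thr m k) + 4 * thr m k) 0).
    { replace 0 with (0 + 4 * 0) by lra. apply CV_plus. apply (SL1 MX PX HPX lX); auto; lra.
      apply CV_mult. intros eps He; exists 0%nat; intros; unfold R_dist; rewrite Rminus_diag, Rabs_R0; lra.
      apply thr_cv; lra. }
    intros eps He. destruct (Hc eps He) as [N HN]. exists N. intros m Hm.
    specialize (HN m Hm). rewrite leaf_mass_to_decomp by auto.
    set (T := sumR (fun s => Hto y (fo phi s) * PX s) (words MX m)).
    pose proof (ov_J_sum MX PX HPX (lft PY y) (lft PY y + PY y) m ltac:(lra) ltac:(lra)) as Hov.
    assert (HU : T <= PY y).
    { assert (T <= sumR (fun s => ov (lft PX s) (lft PX s + PX s) (lft PY y) (lft PY y + PY y)) (words MX m)); [|lra].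
      apply sumR_le; intros s Hs. apply upper; auto. apply In_words in Hs; tauto. }
    assert (HLo : PY y - T <= PrGt MX PX m (thr m k) + 4 * thr m k).
    { pose proof (thr_pos m k).
      replace (PY y - T) with (sumR (fun s => ov (lft PX s) (lft PX s + PX s) (lft PY y) (lft PY y + PY y)) (words MX m) - T) by lra.
      unfold T. rewrite <- sumR_minus.
      eapply Rle_trans. apply sumR_le; intros s Hs. apply (lower s y (thr m k)); auto. apply In_words in Hs; tauto.
      rewrite !sumR_plus. unfold PrGt.
      pose proof (wv_sum MX PX HPX (thr m k) (lft PY y) m ltac:(lra) H2).
      pose proof (wv_sum MX PX HPX (thr m k) (lft PY y + PY y) m ltac:(lra) H2). lra. }
    unfold R_dist in *. rewrite Rminus_0_r in HN.
    pose proof (Rle_abs (PrGt MX PX m (thr m k) + 4 * thr m k)).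
    rewrite Rabs_left1 by lra. lra.
Qed.
End Valid.

Lemma inf_both MX PX MY PY t :
  (forall x, achv MX PX MY PY x -> t <= x) ->
  (forall r, r > t -> int_achievable MX PX MY PY r) ->
  (forall n, gen_alg MX PX MY PY n (interval_alg PX MY PY n)) ->
  is_inf (int_achievable MX PX MY PY) t /\ is_inf (achievable MX PX MY PY) t.
Proof. intros H1 H2 V. split; split.
  - intros x Hx. apply H1. exists (fun n => interval_alg PX MY PY n). split; auto.
  - intros m' Hm. destruct (Rle_dec m' t); auto. exfalso.
    assert (m' <= (t + m') / 2) by (apply Hm; apply H2; lra). lra.
  - intros x Hx. apply H1. exact Hx.
  - intros m' Hm. destruct (Rle_dec m' t); auto. exfalso.
    assert (m' <= (t + m') / 2). { apply Hm. exists (fun n => interval_alg PX MY PY n). split; auto.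
      apply H2; lra. } lra.
Qed.

Theorem corollary3 (MX : nat) (PX : list nat -> R) (MY : nat) (PY : list nat -> R) :
  is_process MX PX -> is_process MY PY ->
  (* (i) *)
  (forall hX hY : R,
     Hbar MX PX hX -> Hund MX PX hX -> Hrate MX PX hX -> hX > 0 ->
     Hbar MY PY hY ->
     is_inf (int_achievable MX PX MY PY) (hY / hX) /\
     is_inf (achievable MX PX MY PY) (hY / hX)) /\
  (* (ii) *)
  (forall hY lX : R,
     Hbar MY PY hY -> Hund MY PY hY -> Hrate MY PY hY ->
     Hund MX PX lX -> lX > 0 ->
     is_inf (int_achievable MX PX MY PY) (hY / lX) /\
     is_inf (achievable MX PX MY PY) (hY / lX)).
Proof. intros HPX HPY. split.
  - intros hX hY HbX HuX _ HhX HbY. apply inf_both.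
    + intros x Hx. apply (conv1 MX PX MY PY HPX HPY hX hY x); auto.
    + intros r Hr. apply (ach MX PX MY PY HPX HPY hY hX r); auto.
    + intros n. apply (int_valid MX PX MY PY HPX HPY n hX); auto.
  - intros hY lX HbY HuY _ HuX HlX. apply inf_both.
    + intros x Hx. apply (conv2 MX PX MY PY HPX HPY hY lX x); auto.
    + intros r Hr. apply (ach MX PX MY PY HPX HPY hY lX r); auto.
    + intros n. apply (int_valid MX PX MY PY HPX HPY n lX); auto.
Qed.
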